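(* For all terms $P,Q$ of $\mathcal{L}$: if $P\rightsquigarrow Q$ then $P\sim Q$. Consequently, for every term $P$, $P\sim\mathrm{nf}(P)$.
   Context: Calculus $\mathcal{L}$: names are constants ($a,b,c,d$) or name variables ($x,y,z$), $m,n$ range over names; process variables $X,Y,Z$. Terms: $P,Q::=0\mid X\mid m(X).P\mid \overline{m}(Q)\mid P|Q\mid \langle X\rangle P\mid P\langle Q\rangle\mid\langle x\rangle P\mid P\langle n\rangle$ with the usual binders, up to $\alpha$-conversion, well-typed, applications terminating. $\prod_{i=1}^kP_i=P_1|\cdots|P_k$. Structural congruence $\equiv$: smallest congruence with associativity and commutativity of $|$, $P|0\equiv P$, $(\langle X\rangle P)\langle Q\rangle\equiv P\{Q/X\}$, $(\langle x\rangle P)\langle m\rangle\equiv P\{m/x\}$. Transitions: $m(X).P\xrightarrow{m(X)}P$; $\overline{m}Q\xrightarrow{\overline{m}Q}0$; $P\xrightarrow{\lambda}P'$ implies $P|Q\xrightarrow{\lambda}P'|Q$; $P\xrightarrow{\overline{m}A}P'$, $Q\xrightarrow{m(X)}Q'$ imply $P|Q\xrightarrow{\tau}P'|Q'\{A/X\}$; symmetric versions; closure under $\equiv$. $\sim$ is strong bisimilarity (taken as strong HO-IO bisimilarity: the largest symmetric relation $\mathcal{R}$ such that $P\,\mathcal{R}\,Q$ implies: kinds (non-abstraction / $\langle Y\rangle A$ / $\langle y\rangle A$) agree with bodies related; each output $P\xrightarrow{\overline{a}A}P'$ is matched by $Q\xrightarrow{\overline{a}B}Q'$ with $A\,\mathcal{R}\,B$,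 $P'\,\mathcal{R}\,Q'$; each input $P\xrightarrow{a(X)}P'$ by $Q\xrightarrow{a(X)}Q'$ with $P'\,\mathcal{R}\,Q'$; $P\equiv X|P'$ by $Q\equiv X|Q'$, $P'\,\mathcal{R}\,Q'$; $P\equiv X\langle A\rangle|P'$ by $Q\equiv X\langle B\rangle|Q'$, $A\,\mathcal{R}\,B$, $P'\,\mathcal{R}\,Q'$; $P\equiv X\langle d\rangle|P'$ by $Q\equiv X\langle d\rangle|Q'$, $P'\,\mathcal{R}\,Q'$). Laws: DIS: $a(X).(P|\prod_{1}^{k-1}a(X).P)=\prod_1^ka(X).P$; APP1: $(\langle X\rangle P)\langle Q\rangle=P\{Q/X\}$; APP2: $(\langle x\rangle P)\langle m\rangle=P\{m/x\}$. $P\rightsquigarrow Q$ means there are $P'\equiv P$, $Q'\equiv Q$ such that $Q'$ is obtained from $P'$ by rewriting one subterm with DIS, APP1 or APP2 from left to right. $P$ is in normal form if no $Q$ with $P\rightsquigarrow Q$ exists; $\mathrm{nf}(P)$ is the (unique up to $\equiv$) normal form reached from $P$. *)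

(* Defs.v *)
(* The calculus L, in de Bruijn representation (two sorts of
   variables: name variables x,y,z and process variables X,Y,Z), so that
   terms are automatically identified up to alpha-conversion. *)
From Stdlib Require Import List Relations.
Import ListNotations.

(* names: constants a,b,c,d (NC c) or name variables x,y,z (NV i, de Bruijn) *)
Inductive name : Type :=
| NC (c : nat)
| NV (i : nat).

Inductive term : Type :=
| Nil
| PVar (i : nat)
| Inp (m : name) (P : term)        (* m(X).P, binds process variable 0 in P *)
| Out (m : name) (Q : term)
| Par (P Q : term)
| PAbs (P : term)                  (* <X>P, binds process variable 0 in P *)
| PApp (P Q : term)
| NAbs (P : term)                  (* <x>P, binds name variable 0 in P *)
| NApp (P : term) (n : name).

Definition up_ren (f : nat -> nat) : nat -> nat :=
  fun i => match i with 0 => 0 | S k => S (f k) end.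

Definition ren_name (g : nat -> nat) (m : name) : name :=
  match m with NC c => NC c | NV i => NV (g i) end.

Fixpoint ren (f g : nat -> nat) (P : term) : term :=
  match P with
  | Nil => Nil
  | PVar i => PVar (f i)
  | Inp m P => Inp (ren_name g m) (ren (up_ren f) g P)
  | Out m Q => Out (ren_name g m) (ren f g Q)
  | Par P Q => Par (ren f g P) (ren f g Q)
  | PAbs P => PAbs (ren (up_ren f) g P)
  | PApp P Q => PApp (ren f g P) (ren f g Q)
  | NAbs P => NAbs (ren f (up_ren g) P)
  | NApp P n => NApp (ren f g P) (ren_name g n)
  end.

Definition liftP (P : term) : term := ren S (fun i => i) P.

Definition up_psub (s : nat -> term) : nat -> term :=
  fun i => match i with 0 => PVar 0 | S k => ren S (fun j => j) (s k) end.
Definition upn_psub (s : nat -> term) : nat -> term :=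
  fun i => ren (fun j => j) S (s i).

Fixpoint psubst (s : nat -> term) (P : term) : term :=
  match P with
  | Nil => Nil
  | PVar i => s i
  | Inp m P => Inp m (psubst (up_psub s) P)
  | Out m Q => Out m (psubst s Q)
  | Par P Q => Par (psubst s P) (psubst s Q)
  | PAbs P => PAbs (psubst (up_psub s) P)
  | PApp P Q => PApp (psubst s P) (psubst s Q)
  | NAbs P => NAbs (psubst (upn_psub s) P)
  | NApp P n => NApp (psubst s P) n
  end.

Definition psubst1 (Q : term) (P : term) : term :=
  psubst (fun i => match i with 0 => Q | S k => PVar k end) P.

Definition subst_name (t : nat -> name) (m : name) : name :=
  match m with NC c => NC c | NV i => t i end.
Definition up_nsub (t : nat -> name) : nat -> name :=
  fun i => match i with 0 => NV 0 | S k => ren_name S (t k) end.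

Fixpoint nsubst (t : nat -> name) (P : term) : term :=
  match P with
  | Nil => Nil
  | PVar i => PVar i
  | Inp m P => Inp (subst_name t m) (nsubst t P)
  | Out m Q => Out (subst_name t m) (nsubst t Q)
  | Par P Q => Par (nsubst t P) (nsubst t Q)
  | PAbs P => PAbs (nsubst t P)
  | PApp P Q => PApp (nsubst t P) (nsubst t Q)
  | NAbs P => NAbs (nsubst (up_nsub t) P)
  | NApp P n => NApp (nsubst t P) (subst_name t n)
  end.

Definition nsubst1 (m : name) (P : term) : term :=
  nsubst (fun i => match i with 0 => m | S k => NV k end) P.

Inductive scong : term -> term -> Prop :=
| sc_refl P : scong P P
| sc_sym P Q : scong P Q -> scong Q P
| sc_trans P Q R : scong P Q -> scong Q R -> scong P R
| sc_par_assoc P Q R : scong (Par P (Par Q R)) (Par (Par P Q) R)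
| sc_par_comm P Q : scong (Par P Q) (Par Q P)
| sc_par_nil P : scong (Par P Nil) P
| sc_beta_p P Q : scong (PApp (PAbs P) Q) (psubst1 Q P)
| sc_beta_n P m : scong (NApp (NAbs P) m) (nsubst1 m P)
| sc_inp m P P' : scong P P' -> scong (Inp m P) (Inp m P')
| sc_out m Q Q' : scong Q Q' -> scong (Out m Q) (Out m Q')
| sc_par P P' Q Q' : scong P P' -> scong Q Q' -> scong (Par P Q) (Par P' Q')
| sc_pabs P P' : scong P P' -> scong (PAbs P) (PAbs P')
| sc_papp P P' Q Q' : scong P P' -> scong Q Q' -> scong (PApp P Q) (PApp P' Q')
| sc_nabs P P' : scong P P' -> scong (NAbs P) (NAbs P')
| sc_napp P P' n : scong P P' -> scong (NApp P n) (NApp P' n).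

(* LInp m stands for the input label m(X); the bound X is process variable 0
   of the derivative. *)
Inductive label : Type :=
| LOut (m : name) (A : term)
| LInp (m : name)
| LTau.

Inductive trans : term -> label -> term -> Prop :=
| tr_inp m P : trans (Inp m P) (LInp m) P
| tr_out m Q : trans (Out m Q) (LOut m Q) Nil
| tr_parl_out P Q m A P' :
    trans P (LOut m A) P' -> trans (Par P Q) (LOut m A) (Par P' Q)
| tr_parl_tau P Q P' :
    trans P LTau P' -> trans (Par P Q) LTau (Par P' Q)
| tr_parl_inp P Q m P' :       (* X chosen fresh for Q: Q is lifted *)
    trans P (LInp m) P' -> trans (Par P Q) (LInp m) (Par P' (liftP Q))
| tr_parr_out P Q m A Q' :
    trans Q (LOut m A) Q' -> trans (Par P Q) (LOut m A) (Par P Q')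
| tr_parr_tau P Q Q' :
    trans Q LTau Q' -> trans (Par P Q) LTau (Par P Q')
| tr_parr_inp P Q m Q' :
    trans Q (LInp m) Q' -> trans (Par P Q) (LInp m) (Par (liftP P) Q')
| tr_comm_l P Q m A P' Q' :
    trans P (LOut m A) P' -> trans Q (LInp m) Q' ->
    trans (Par P Q) LTau (Par P' (psubst1 A Q'))
| tr_comm_r P Q m A P' Q' :
    trans P (LInp m) P' -> trans Q (LOut m A) Q' ->
    trans (Par P Q) LTau (Par (psubst1 A P') Q')
| tr_scong P P0 l P0' P' :
    scong P P0 -> trans P0 l P0' -> scong P0' P' -> trans P l P'.

Definition is_bisimulation (R : term -> term -> Prop) : Prop :=
  forall P Q, R P Q ->
  (((forall A, ~ scong P (PAbs A)) /\ (forall A, ~ scong P (NAbs A))) ->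
     (forall B, ~ scong Q (PAbs B)) /\ (forall B, ~ scong Q (NAbs B))) /\
  (forall A, scong P (PAbs A) -> exists B, scong Q (PAbs B) /\ R A B) /\
  (forall A, scong P (NAbs A) -> exists B, scong Q (NAbs B) /\ R A B) /\
  (forall m A P', trans P (LOut m A) P' ->
     exists B Q', trans Q (LOut m B) Q' /\ R A B /\ R P' Q') /\
  (forall m P', trans P (LInp m) P' ->
     exists Q', trans Q (LInp m) Q' /\ R P' Q') /\
  (forall i P', scong P (Par (PVar i) P') ->
     exists Q', scong Q (Par (PVar i) Q') /\ R P' Q') /\
  (forall i A P', scong P (Par (PApp (PVar i) A) P') ->
     exists B Q', scong Q (Par (PApp (PVar i) B) Q') /\ R A B /\ R P' Q') /\
  (forall i d P', scong P (Par (NApp (PVar i) d) P') ->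
     exists Q', scong Q (Par (NApp (PVar i) d) Q') /\ R P' Q').

Definition bisim (P Q : term) : Prop :=
  exists R : term -> term -> Prop,
    (forall A B, R A B -> R B A) /\ is_bisimulation R /\ R P Q.

Fixpoint prod (l : list term) : term :=
  match l with
  | [] => Nil
  | [P] => P
  | P :: l' => Par P (prod l')
  end.

(* left-to-right instances of DIS (with k = n+1 >= 1), APP1, APP2.
   In DIS the inner copies of m(X).P sit under the outer binder X,
   hence are lifted. *)
Inductive law : term -> term -> Prop :=
| law_dis m P n :
    law (Inp m (Par P (prod (repeat (liftP (Inp m P)) n))))
        (prod (repeat (Inp m P) (S n)))
| law_app1 P Q : law (PApp (PAbs P) Q) (psubst1 Q P)
| law_app2 P m : law (NApp (NAbs P) m) (nsubst1 m P).

Inductive ctx_step : term -> term -> Prop :=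
| cs_law P Q : law P Q -> ctx_step P Q
| cs_inp m P P' : ctx_step P P' -> ctx_step (Inp m P) (Inp m P')
| cs_out m Q Q' : ctx_step Q Q' -> ctx_step (Out m Q) (Out m Q')
| cs_parl P P' Q : ctx_step P P' -> ctx_step (Par P Q) (Par P' Q)
| cs_parr P Q Q' : ctx_step Q Q' -> ctx_step (Par P Q) (Par P Q')
| cs_pabs P P' : ctx_step P P' -> ctx_step (PAbs P) (PAbs P')
| cs_pappl P P' Q : ctx_step P P' -> ctx_step (PApp P Q) (PApp P' Q)
| cs_pappr P Q Q' : ctx_step Q Q' -> ctx_step (PApp P Q) (PApp P Q')
| cs_nabs P P' : ctx_step P P' -> ctx_step (NAbs P) (NAbs P')
| cs_napp P P' n : ctx_step P P' -> ctx_step (NApp P n) (NApp P' n).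

Definition rw (P Q : term) : Prop :=
  exists P' Q', scong P' P /\ scong Q' Q /\ ctx_step P' Q'.

Definition normal_form (P : term) : Prop := forall Q, ~ rw P Q.

Definition is_nf_of (P Q : term) : Prop :=
  clos_refl_trans term rw P Q /\ normal_form Q.

(* Main.v *)
Require Import Defs.
From Stdlib Require Import List Relations Permutation Lia FunctionalExtensionality.
Import ListNotations.


Definition idf : nat -> nat := fun i => i.

Lemma up_ren_id : up_ren (fun i => i) = (fun i => i).
Proof. apply functional_extensionality; intros [|i]; reflexivity. Qed.

Lemma ren_name_id m : ren_name (fun i => i) m = m.
Proof. destruct m; reflexivity. Qed.

Lemma ren_name_ren f g m : ren_name f (ren_name g m) = ren_name (fun i => f (g i)) m.
Proof. destruct m; reflexivity. Qed.

Lemma up_ren_comp f g : (fun i => up_ren f (up_ren g i)) = up_ren (fun i => f (g i)).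
Proof. apply functional_extensionality; intros [|i]; reflexivity. Qed.

Lemma ren_ren P : forall f g f' g',
  ren f g (ren f' g' P) = ren (fun i => f (f' i)) (fun i => g (g' i)) P.
Proof.
  induction P; intros; simpl;
  rewrite ?ren_name_ren, ?IHP, ?IHP1, ?IHP2, ?up_ren_comp; reflexivity.
Qed.

Lemma ren_id P : ren (fun i => i) (fun i => i) P = P.
Proof.
  induction P; simpl; rewrite ?ren_name_id, ?up_ren_id, ?IHP, ?IHP1, ?IHP2; reflexivity.
Qed.

Lemma ren_psubst P : forall f g s,
  ren f g (psubst s P) = psubst (fun i => ren f g (s i)) (ren (fun i => i) g P).
Proof.
  induction P; intros; simpl; rewrite ?up_ren_id; try reflexivity.
  - rewrite IHP. f_equal. f_equal. apply functional_extensionality; intros [|i]; simpl.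
    reflexivity. unfold up_psub. rewrite !ren_ren. reflexivity.
  - rewrite IHP. reflexivity.
  - rewrite IHP1, IHP2. reflexivity.
  - rewrite IHP. f_equal. f_equal. apply functional_extensionality; intros [|i]; simpl.
    reflexivity. unfold up_psub. rewrite !ren_ren. reflexivity.
  - rewrite IHP1, IHP2. reflexivity.
  - rewrite IHP. f_equal. f_equal. apply functional_extensionality; intros i.
    unfold upn_psub. rewrite !ren_ren. reflexivity.
  - rewrite IHP. reflexivity.
Qed.

Lemma psubst_ren P : forall f s,
  psubst s (ren f (fun i => i) P) = psubst (fun i => s (f i)) P.
Proof.
  induction P; intros; simpl; rewrite ?up_ren_id, ?ren_name_id; try reflexivity.
  - rewrite IHP. f_equal. f_equal. apply functional_extensionality; intros [|i]; reflexivity.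
  - rewrite IHP. reflexivity.
  - rewrite IHP1, IHP2. reflexivity.
  - rewrite IHP. f_equal. f_equal. apply functional_extensionality; intros [|i]; reflexivity.
  - rewrite IHP1, IHP2. reflexivity.
  - rewrite IHP. reflexivity.
  - rewrite IHP. reflexivity.
Qed.

Lemma psubst_id P : psubst PVar P = P.
Proof.
  induction P; simpl; try reflexivity.
  - replace (up_psub PVar) with PVar. rewrite IHP; reflexivity.
    apply functional_extensionality; intros [|i]; reflexivity.
  - rewrite IHP; reflexivity.
  - rewrite IHP1, IHP2; reflexivity.
  - replace (up_psub PVar) with PVar. rewrite IHP; reflexivity.
    apply functional_extensionality; intros [|i]; reflexivity.
  - rewrite IHP1, IHP2; reflexivity.
  - replace (upn_psub PVar) with PVar. rewrite IHP; reflexivity.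
    apply functional_extensionality; intros i; reflexivity.
  - rewrite IHP; reflexivity.
Qed.

Lemma psubst_psubst P : forall s s',
  psubst s (psubst s' P) = psubst (fun i => psubst s (s' i)) P.
Proof.
  induction P; intros; simpl; try reflexivity.
  - rewrite IHP. f_equal. f_equal. apply functional_extensionality; intros [|i]; simpl.
    reflexivity. rewrite psubst_ren.
    rewrite ren_psubst, ren_id. reflexivity.
  - rewrite IHP; reflexivity.
  - rewrite IHP1, IHP2; reflexivity.
  - rewrite IHP. f_equal. f_equal. apply functional_extensionality; intros [|i]; simpl.
    reflexivity. rewrite psubst_ren.
    rewrite ren_psubst, ren_id. reflexivity.
  - rewrite IHP1, IHP2; reflexivity.
  - rewrite IHP. f_equal. f_equal. apply functional_extensionality; intros i; simpl.
    unfold upn_psub. rewrite ren_psubst. reflexivity.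
  - rewrite IHP; reflexivity.
Qed.

Lemma up_nsub_ext t : (fun i => ren_name (up_ren (fun i => i)) (up_nsub t i)) = up_nsub t.
Proof. rewrite up_ren_id. apply functional_extensionality; intros i. apply ren_name_id. Qed.

Lemma ren_nsubst P : forall f g t,
  ren f g (nsubst t P) = nsubst (fun i => ren_name g (t i)) (ren f (fun i => i) P).
Proof.
  induction P; intros; simpl; rewrite ?up_ren_id; try reflexivity.
  - rewrite IHP. f_equal. destruct m; simpl; rewrite ?ren_name_id; reflexivity.
  - rewrite IHP. f_equal. destruct m; simpl; rewrite ?ren_name_id; reflexivity.
  - rewrite IHP1, IHP2; reflexivity.
  - rewrite IHP; reflexivity.
  - rewrite IHP1, IHP2; reflexivity.
  - rewrite IHP. f_equal. f_equal. apply functional_extensionality; intros [|i]; simpl.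
    reflexivity. unfold up_nsub. destruct (t i); reflexivity.
  - rewrite IHP. f_equal. destruct n; simpl; rewrite ?ren_name_id; reflexivity.
Qed.

Lemma nsubst_ren P : forall f g t,
  nsubst t (ren f g P) = ren f (fun i => i) (nsubst (fun i => t (g i)) P).
Proof.
  induction P; intros; simpl; rewrite ?up_ren_id; try reflexivity.
  - rewrite IHP. f_equal. destruct m; simpl; rewrite ?ren_name_id; reflexivity.
  - rewrite IHP. f_equal. destruct m; simpl; rewrite ?ren_name_id; reflexivity.
  - rewrite IHP1, IHP2; reflexivity.
  - rewrite IHP; reflexivity.
  - rewrite IHP1, IHP2; reflexivity.
  - rewrite IHP. f_equal. f_equal. f_equal. apply functional_extensionality; intros [|i]; reflexivity.
  - rewrite IHP. f_equal. destruct n; simpl; rewrite ?ren_name_id; reflexivity.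
Qed.

Lemma up_nsub_NV : up_nsub NV = NV.
Proof. apply functional_extensionality; intros [|i]; reflexivity. Qed.

Lemma nsubst_id P : nsubst NV P = P.
Proof.
  induction P; simpl; rewrite ?up_nsub_NV; try reflexivity;
  try (destruct m); try (destruct n); simpl; rewrite ?IHP, ?IHP1, ?IHP2; reflexivity.
Qed.

Lemma nsubst_psubst P : forall t s,
  nsubst t (psubst s P) = psubst (fun i => nsubst t (s i)) (nsubst t P).
Proof.
  induction P; intros; simpl; try reflexivity.
  - rewrite IHP. f_equal. f_equal. apply functional_extensionality; intros [|i]; simpl.
    reflexivity. unfold up_psub. rewrite nsubst_ren. reflexivity.
  - rewrite IHP; reflexivity.
  - rewrite IHP1, IHP2; reflexivity.
  - rewrite IHP. f_equal. f_equal. apply functional_extensionality; intros [|i]; simpl.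
    reflexivity. unfold up_psub. rewrite nsubst_ren. reflexivity.
  - rewrite IHP1, IHP2; reflexivity.
  - rewrite IHP. f_equal. f_equal. apply functional_extensionality; intros i; simpl.
    unfold upn_psub. rewrite nsubst_ren, ren_id. rewrite ren_nsubst, ren_id. reflexivity.
  - rewrite IHP; reflexivity.
Qed.

Lemma psubst_nsubst P : forall t s s',
  (forall i, nsubst t (s' i) = s i) ->
  psubst s (nsubst t P) = nsubst t (psubst s' P).
Proof.
  induction P; intros t s s' H; simpl; try reflexivity.
  - symmetry; apply H.
  - rewrite (IHP t _ (up_psub s')). reflexivity.
    intros [|i]; simpl. reflexivity. unfold up_psub. rewrite nsubst_ren, H. reflexivity.
  - rewrite (IHP t _ s'); auto.
  - rewrite (IHP1 t _ s'), (IHP2 t _ s'); auto.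
  - rewrite (IHP t _ (up_psub s')). reflexivity.
    intros [|i]; simpl. reflexivity. unfold up_psub. rewrite nsubst_ren, H. reflexivity.
  - rewrite (IHP1 t _ s'), (IHP2 t _ s'); auto.
  - rewrite (IHP _ _ (upn_psub s')). reflexivity.
    intros i. unfold upn_psub. rewrite nsubst_ren, ren_id. rewrite <- H.
    rewrite ren_nsubst, ren_id. reflexivity.
  - rewrite (IHP t _ s'); auto.
Qed.

Lemma nsubst_nsubst P : forall t t',
  nsubst t (nsubst t' P) = nsubst (fun i => subst_name t (t' i)) P.
Proof.
  induction P; intros; simpl; try reflexivity;
  rewrite ?IHP, ?IHP1, ?IHP2; try reflexivity; try (destruct m; reflexivity); try (destruct n; reflexivity).
  f_equal. f_equal. apply functional_extensionality; intros [|i]; simpl. reflexivity.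
  unfold up_nsub. destruct (t' i); reflexivity.
Qed.

Lemma psubst_psubst1 s Q P :
  psubst s (psubst1 Q P) = psubst1 (psubst s Q) (psubst (up_psub s) P).
Proof.
  unfold psubst1. rewrite !psubst_psubst. f_equal.
  apply functional_extensionality; intros [|i]; simpl. reflexivity.
  rewrite psubst_ren. simpl. rewrite psubst_id. reflexivity.
Qed.

Lemma ren_psubst1 f g Q P :
  ren f g (psubst1 Q P) = psubst1 (ren f g Q) (ren (up_ren f) g P).
Proof.
  unfold psubst1. rewrite ren_psubst.
  replace (ren (up_ren f) g P) with (ren (up_ren f) (fun i => i) (ren (fun i => i) g P))
    by (rewrite ren_ren; reflexivity).
  rewrite psubst_ren. f_equal.
  apply functional_extensionality; intros [|i]; reflexivity.
Qed.

Lemma nsubst_psubst1 t Q P :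
  nsubst t (psubst1 Q P) = psubst1 (nsubst t Q) (nsubst t P).
Proof.
  unfold psubst1. rewrite nsubst_psubst. f_equal.
  apply functional_extensionality; intros [|i]; reflexivity.
Qed.

Lemma psubst_nsubst1 s m P :
  psubst s (nsubst1 m P) = nsubst1 m (psubst (upn_psub s) P).
Proof.
  unfold nsubst1. apply psubst_nsubst. intros i. unfold upn_psub.
  rewrite nsubst_ren, ren_id. simpl. apply nsubst_id.
Qed.

Lemma ren_nsubst1 f g m P :
  ren f g (nsubst1 m P) = nsubst1 (ren_name g m) (ren f (up_ren g) P).
Proof.
  unfold nsubst1. rewrite ren_nsubst. rewrite (nsubst_ren P f (up_ren g)).
  rewrite (ren_nsubst _ f (fun i => i)).
  f_equal. apply functional_extensionality; intros [|i]; simpl; rewrite ?ren_name_id; reflexivity.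
Qed.

Lemma nsubst_nsubst1 t m P :
  nsubst t (nsubst1 m P) = nsubst1 (subst_name t m) (nsubst (up_nsub t) P).
Proof.
  unfold nsubst1. rewrite !nsubst_nsubst. f_equal.
  apply functional_extensionality; intros [|i]; simpl. reflexivity.
  unfold up_nsub. destruct (t i); reflexivity.
Qed.

Lemma liftP_psubst s P : liftP (psubst s P) = psubst (up_psub s) (liftP P).
Proof.
  unfold liftP. rewrite ren_psubst, ren_id, psubst_ren. reflexivity.
Qed.

Lemma liftP_nsubst t P : liftP (nsubst t P) = nsubst t (liftP P).
Proof.
  unfold liftP. rewrite nsubst_ren. reflexivity.
Qed.

Lemma liftP_ren f g P : liftP (ren f g P) = ren (up_ren f) g (liftP P).
Proof. unfold liftP. rewrite !ren_ren. reflexivity. Qed.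

Lemma prod_cons_ne x l : l <> [] -> prod (x :: l) = Par x (prod l).
Proof. destruct l. congruence. reflexivity. Qed.

Lemma ren_prod f g l : ren f g (prod l) = prod (map (ren f g) l).
Proof.
  induction l as [|x l IH]; simpl. reflexivity.
  destruct l. reflexivity. simpl in *. rewrite IH. reflexivity.
Qed.

Lemma psubst_prod s l : psubst s (prod l) = prod (map (psubst s) l).
Proof.
  induction l as [|x l IH]; simpl. reflexivity.
  destruct l. reflexivity. simpl in *. rewrite IH. reflexivity.
Qed.

Lemma nsubst_prod s l : nsubst s (prod l) = prod (map (nsubst s) l).
Proof.
  induction l as [|x l IH]; simpl. reflexivity.
  destruct l. reflexivity. simpl in *. rewrite IH. reflexivity.
Qed.


Inductive ac : term -> term -> Prop :=
| ac_refl P : ac P P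
| ac_sym P Q : ac P Q -> ac Q P
| ac_trans P Q R : ac P Q -> ac Q R -> ac P R
| ac_assoc P Q R : ac (Par P (Par Q R)) (Par (Par P Q) R)
| ac_comm P Q : ac (Par P Q) (Par Q P)
| ac_nil P : ac (Par P Nil) P
| ac_inp m P P' : ac P P' -> ac (Inp m P) (Inp m P')
| ac_out m Q Q' : ac Q Q' -> ac (Out m Q) (Out m Q')
| ac_par P P' Q Q' : ac P P' -> ac Q Q' -> ac (Par P Q) (Par P' Q')
| ac_pabs P P' : ac P P' -> ac (PAbs P) (PAbs P')
| ac_papp P P' Q Q' : ac P P' -> ac Q Q' -> ac (PApp P Q) (PApp P' Q')
| ac_nabs P P' : ac P P' -> ac (NAbs P) (NAbs P')
| ac_napp P P' n : ac P P' -> ac (NApp P n) (NApp P' n).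

Hint Constructors ac : core.

Lemma ac_scong P Q : ac P Q -> scong P Q.
Proof. induction 1; eauto using scong. Qed.

Lemma ac_ren P Q f g : ac P Q -> ac (ren f g P) (ren f g Q).
Proof. intros H; revert f g; induction H; intros; simpl; eauto. Qed.

Lemma ac_psubst P Q s : ac P Q -> ac (psubst s P) (psubst s Q).
Proof. intros H; revert s; induction H; intros; simpl; eauto. Qed.

Lemma ac_nsubst P Q s : ac P Q -> ac (nsubst s P) (nsubst s Q).
Proof. intros H; revert s; induction H; intros; simpl; eauto. Qed.

Lemma ac_psubst_pt P : forall s s', (forall i, ac (s i) (s' i)) -> ac (psubst s P) (psubst s' P).
Proof.
  induction P; intros s s' H; simpl; auto.
  - apply ac_inp, IHP. intros [|i]; simpl; auto. apply ac_ren, H.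
  - apply ac_pabs, IHP. intros [|i]; simpl; auto. apply ac_ren, H.
  - apply ac_nabs, IHP. intros i; unfold upn_psub; apply ac_ren, H.
Qed.

Lemma ac_psubst1 Q Q' P P' : ac Q Q' -> ac P P' -> ac (psubst1 Q P) (psubst1 Q' P').
Proof.
  intros HQ HP. apply ac_trans with (psubst1 Q P').
  apply ac_psubst, HP. apply ac_psubst_pt. intros [|i]; simpl; auto.
Qed.

Lemma scong_ren P Q f g : scong P Q -> scong (ren f g P) (ren f g Q).
Proof.
  intros H; revert f g; induction H; intros; simpl; eauto using scong.
  - rewrite ren_psubst1. apply sc_beta_p.
  - rewrite ren_nsubst1. apply sc_beta_n.
Qed.

Lemma scong_psubst P Q s : scong P Q -> scong (psubst s P) (psubst s Q).
Proof.
  intros H; revert s; induction H; intros; simpl; eauto using scong.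
  - rewrite psubst_psubst1. apply sc_beta_p.
  - rewrite psubst_nsubst1. apply sc_beta_n.
Qed.

Lemma scong_nsubst P Q s : scong P Q -> scong (nsubst s P) (nsubst s Q).
Proof.
  intros H; revert s; induction H; intros; simpl; eauto using scong.
  - rewrite nsubst_psubst1. apply sc_beta_p.
  - rewrite nsubst_nsubst1. apply sc_beta_n.
Qed.

Lemma scong_psubst_pt P : forall s s', (forall i, scong (s i) (s' i)) -> scong (psubst s P) (psubst s' P).
Proof.
  induction P; intros s s' H; simpl; eauto using scong.
  - apply sc_inp, IHP. intros [|i]; simpl; eauto using scong. apply scong_ren, H.
  - apply sc_pabs, IHP. intros [|i]; simpl; eauto using scong. apply scong_ren, H.
  - apply sc_nabs, IHP. intros i; unfold upn_psub; apply scong_ren, H.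
Qed.

Fixpoint primes (P : term) : list term :=
  match P with
  | Nil => []
  | Par P Q => primes P ++ primes Q
  | _ => [P]
  end.

Definition acprime (p q : term) : Prop :=
  match p, q with
  | Inp m P, Inp m' P' => m = m' /\ ac P P'
  | Out m P, Out m' P' => m = m' /\ ac P P'
  | PVar i, PVar j => i = j
  | PAbs P, PAbs P' => ac P P'
  | PApp P Q, PApp P' Q' => ac P P' /\ ac Q Q'
  | NAbs P, NAbs P' => ac P P'
  | NApp P n, NApp P' n' => ac P P' /\ n = n'
  | _, _ => False
  end.

Definition isprime (p : term) : Prop :=
  match p with Nil => False | Par _ _ => False | _ => True end.

Lemma acprime_sym p q : acprime p q -> acprime q p.
Proof. destruct p, q; simpl; intuition eauto. Qed.

Lemma acprime_trans p q r : acprime p q -> acprime q r -> acprime p r.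
Proof. destruct p, q, r; simpl; intuition (subst; eauto). Qed.

Lemma acprime_refl p : isprime p -> acprime p p.
Proof. destruct p; simpl; intuition. Qed.

Lemma acprime_ac p q : acprime p q -> ac p q.
Proof. destruct p, q; simpl; intuition (subst; eauto). Qed.

Lemma primes_isprime P : Forall isprime (primes P).
Proof.
  induction P; simpl; try (apply Forall_app; split; auto); repeat constructor.
Qed.

Definition PR (l1 l2 : list term) : Prop :=
  exists l, Permutation l1 l /\ Forall2 acprime l l2.

Lemma Forall2_perm {A B} (R : A -> B -> Prop) l l' m :
  Permutation l l' -> Forall2 R l m -> exists m', Permutation m m' /\ Forall2 R l' m'.
Proof.
  intros Hp; revert m; induction Hp; intros m0 HF.
  - exists m0; split; auto.
  - inversion HF; subst. match goal with h : Forall2 _ l _ |- _ => destruct (IHHp _ h) as [m' [Ha Hb]] end.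
    exists (y :: m'); split; auto.
  - inversion HF; subst. match goal with h : Forall2 _ (_ :: _) _ |- _ => inversion h; subst end.
    eexists. split. apply perm_swap. auto.
  - destruct (IHHp1 _ HF) as [m1 [Ha Hb]]. destruct (IHHp2 _ Hb) as [m2 [Hc Hd]].
    exists m2; split; eauto using Permutation_trans.
Qed.

Lemma Forall2_flip {A B} (R : A -> B -> Prop) l m :
  Forall2 R l m -> Forall2 (fun b a => R a b) m l.
Proof. induction 1; auto. Qed.

Lemma Forall2_trans_gen {A} (R : A -> A -> Prop) l m n :
  (forall a b c, R a b -> R b c -> R a c) ->
  Forall2 R l m -> Forall2 R m n -> Forall2 R l n.
Proof.
  intros Ht H1; revert n; induction H1; intros n H2; inversion H2; subst; eauto.
Qed.

Lemma Forall2_impl' {A B} (R S : A -> B -> Prop) l m :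
  (forall a b, R a b -> S a b) -> Forall2 R l m -> Forall2 S l m.
Proof. intros H; induction 1; auto. Qed.

Lemma F2_refl l : Forall isprime l -> Forall2 acprime l l.
Proof. induction 1; constructor; auto. apply acprime_refl; auto. Qed.

Lemma PR_refl l : Forall isprime l -> PR l l.
Proof.
  intros H. exists l; split; auto. induction H; constructor; auto. apply acprime_refl; auto.
Qed.

Lemma PR_sym l m : PR l m -> PR m l.
Proof.
  intros [k [Hp HF]].
  destruct (Forall2_perm _ _ _ _ (Permutation_sym Hp) HF) as [m' [H1 H2]].
  exists m'; split; auto. apply Forall2_flip in H2.
  exact (Forall2_impl' _ _ _ _ (fun a b h => acprime_sym b a h) H2).
Qed.

Lemma PR_trans l m n : PR l m -> PR m n -> PR l n.
Proof.
  intros [k [Hp HF]] [k' [Hp' HF']].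
  apply Forall2_flip in HF.
  destruct (Forall2_perm _ _ _ _ Hp' HF) as [k2 [H1 H2]].
  exists k2. split. eauto using Permutation_trans.
  apply Forall2_flip in H2.
  eapply Forall2_trans_gen; eauto. apply acprime_trans.
Qed.

Lemma PR_app l1 l2 m1 m2 : PR l1 m1 -> PR l2 m2 -> PR (l1 ++ l2) (m1 ++ m2).
Proof.
  intros [k1 [H1 F1]] [k2 [H2 F2]]. exists (k1 ++ k2). split.
  apply Permutation_app; auto. apply Forall2_app; auto.
Qed.

Lemma ac_primes P Q : ac P Q -> PR (primes P) (primes Q).
Proof.
  induction 1; simpl.
  - apply PR_refl, primes_isprime.
  - apply PR_sym; auto.
  - eapply PR_trans; eauto.
  - rewrite app_assoc. apply PR_refl. apply primes_isprime with (P := Par (Par P Q) R).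
  - exists (primes Q ++ primes P). split. apply Permutation_app_comm.
    apply F2_refl. apply primes_isprime with (P := Par Q P).
  - rewrite app_nil_r. apply PR_refl, primes_isprime.
  - exists [Inp m P]; split; [apply Permutation_refl | constructor; [simpl; auto | constructor]].
  - exists [Out m Q]; split; [apply Permutation_refl | constructor; [simpl; auto | constructor]].
  - apply PR_app; auto.
  - exists [PAbs P]; split; [apply Permutation_refl | constructor; [simpl; auto | constructor]].
  - exists [PApp P Q]; split; [apply Permutation_refl | constructor; [simpl; auto | constructor]].
  - exists [NAbs P]; split; [apply Permutation_refl | constructor; [simpl; auto | constructor]].
  - exists [NApp P n]; split; [apply Permutation_refl | constructor; [simpl; auto | constructor]].
Qed.

Lemma prod_app l1 l2 : ac (prod (l1 ++ l2)) (Par (prod l1) (prod l2)).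
Proof.
  induction l1 as [|x l1 IH]; simpl.
  - eapply ac_trans; [|apply ac_comm]. apply ac_sym, ac_nil.
  - destruct l1 as [|y l1]; simpl in *.
    + destruct l2; simpl. apply ac_sym, ac_nil. apply ac_refl.
    + eapply ac_trans; [|apply ac_assoc]. apply ac_par; auto.
Qed.

Lemma prod_cons x l : ac (prod (x :: l)) (Par x (prod l)).
Proof. destruct l; simpl. apply ac_sym, ac_nil. apply ac_refl. Qed.

Lemma prod_perm l l' : Permutation l l' -> ac (prod l) (prod l').
Proof.
  induction 1.
  - apply ac_refl.
  - eapply ac_trans; [apply prod_cons|]. eapply ac_trans; [|apply ac_sym, prod_cons]. auto.
  - eapply ac_trans; [apply prod_cons|]. eapply ac_trans; [|apply ac_sym, prod_cons].
    eapply ac_trans; [apply ac_par; [apply ac_refl| apply prod_cons]|].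
    eapply ac_trans; [|apply ac_par; [apply ac_refl| apply ac_sym, prod_cons]].
    eapply ac_trans; [apply ac_assoc|]. eapply ac_trans; [|apply ac_sym, ac_assoc].
    apply ac_par; auto.
  - eauto.
Qed.

Lemma prod_F2 l m : Forall2 acprime l m -> ac (prod l) (prod m).
Proof.
  induction 1. apply ac_refl.
  eapply ac_trans; [apply prod_cons|]. eapply ac_trans; [|apply ac_sym, prod_cons].
  apply ac_par; auto. apply acprime_ac; auto.
Qed.

Lemma ac_prod_primes X : ac X (prod (primes X)).
Proof.
  induction X; simpl; try apply ac_refl.
  eapply ac_trans; [|apply ac_sym, prod_app]. apply ac_par; auto.
Qed.

Lemma PR_ac X Y : PR (primes X) (primes Y) -> ac X Y.
Proof.
  intros [k [Hp HF]].
  eapply ac_trans; [apply ac_prod_primes|].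
  eapply ac_trans; [apply prod_perm, Hp|].
  eapply ac_trans; [apply prod_F2, HF|]. apply ac_sym, ac_prod_primes.
Qed.

Lemma PR_single_inv x m : PR [x] m -> exists y, m = [y] /\ acprime x y.
Proof.
  intros [k [Hp HF]]. apply Permutation_length_1_inv in Hp. subst.
  inversion HF; subst. inversion H3; subst. eauto.
Qed.

Lemma PR_cons_inv x l m : PR (x :: l) m ->
  exists y m', Permutation m (y :: m') /\ acprime x y /\ PR l m'.
Proof.
  intros [k [Hp HF]].
  assert (Hin : In x k) by (eapply Permutation_in; eauto; left; auto).
  apply in_split in Hin. destruct Hin as [k1 [k2 ->]].
  apply Forall2_app_inv_l in HF. destruct HF as [m1 [m2' [F1 [F2 ->]]]].
  inversion F2; subst.
  exists y, (m1 ++ l'). split. apply Permutation_sym, Permutation_middle.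
  split; auto. exists (k1 ++ k2). split.
  eapply Permutation_cons_app_inv; eauto. apply Forall2_app; auto.
Qed.

Lemma ac_prime_inv p q : isprime p -> isprime q -> ac p q -> acprime p q.
Proof.
  intros Hp Hq H. apply ac_primes in H.
  destruct p; simpl in Hp; try contradiction; destruct q; simpl in Hq; try contradiction;
  simpl in H; apply PR_single_inv in H; destruct H as [y [Hy Ha]]; inversion Hy; subst; auto.
Qed.

Fixpoint size (P : term) : nat :=
  match P with
  | Nil => 1
  | PVar _ => 1
  | Inp _ P => S (size P)
  | Out _ P => S (size P)
  | Par P Q => S (size P + size Q)
  | PAbs P => S (size P)
  | PApp P Q => S (size P + size Q)
  | NAbs P => S (size P)
  | NApp P _ => S (size P)
  end.

Lemma size_primes X p : In p (primes X) -> size p <= size X.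
Proof.
  induction X; simpl; intros H; try (destruct H as [H|[]]; subst; simpl; lia).
  contradiction.
  apply in_app_or in H. destruct H; [apply IHX1 in H|apply IHX2 in H]; lia.
Qed.

Lemma ac_abs_inv X B : ac X (PAbs B) -> exists B0, size B0 < size X /\ ac B0 B.
Proof.
  intros H. apply ac_primes in H. simpl in H. apply PR_sym in H.
  apply PR_single_inv in H. destruct H as [y [Hy Ha]].
  assert (Hin : In y (primes X)) by (rewrite Hy; left; auto).
  apply size_primes in Hin. destruct y; simpl in Ha; try contradiction.
  exists y. simpl in Hin. split. lia. apply ac_sym; auto.
Qed.

Lemma ac_nabs_inv X B : ac X (NAbs B) -> exists B0, size B0 < size X /\ ac B0 B.
Proof.
  intros H. apply ac_primes in H. simpl in H. apply PR_sym in H.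
  apply PR_single_inv in H. destruct H as [y [Hy Ha]].
  assert (Hin : In y (primes X)) by (rewrite Hy; left; auto).
  apply size_primes in Hin. destruct y; simpl in Ha; try contradiction.
  exists y. simpl in Hin. split. lia. apply ac_sym; auto.
Qed.


Inductive par : term -> term -> Prop :=
| par_nil : par Nil Nil
| par_pvar i : par (PVar i) (PVar i)
| par_inp m P P' : par P P' -> par (Inp m P) (Inp m P')
| par_out m Q Q' : par Q Q' -> par (Out m Q) (Out m Q')
| par_par P P' Q Q' : par P P' -> par Q Q' -> par (Par P Q) (Par P' Q')
| par_pabs P P' : par P P' -> par (PAbs P) (PAbs P')
| par_papp P P' Q Q' : par P P' -> par Q Q' -> par (PApp P Q) (PApp P' Q')
| par_nabs P P' : par P P' -> par (NAbs P) (NAbs P')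
| par_napp P P' n : par P P' -> par (NApp P n) (NApp P' n)
| par_beta X B B' Q Q' : ac X (PAbs B) -> par B B' -> par Q Q' ->
    par (PApp X Q) (psubst1 Q' B')
| par_nbeta X B B' n : ac X (NAbs B) -> par B B' ->
    par (NApp X n) (nsubst1 n B').

Lemma par_refl P : par P P.
Proof. induction P; constructor; auto. Qed.

Hint Resolve par_refl : core.

Lemma par_scong P Q : par P Q -> scong P Q.
Proof.
  induction 1; eauto using scong.
  - eapply sc_trans. apply sc_papp. apply ac_scong; eauto. eauto.
    eapply sc_trans. apply sc_papp. apply sc_pabs. eauto. apply sc_refl.
    apply sc_beta_p.
  - eapply sc_trans. apply sc_napp. eapply sc_trans. apply ac_scong; eauto.
    apply sc_nabs; eauto. apply sc_beta_n.
Qed.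

Lemma par_ren P Q : par P Q -> forall f g, par (ren f g P) (ren f g Q).
Proof.
  induction 1; intros; simpl; try (constructor; auto).
  - rewrite ren_psubst1. eapply par_beta; eauto. apply ac_ren with (f:=f) (g:=g) in H. exact H.
  - rewrite ren_nsubst1. eapply par_nbeta; eauto. apply ac_ren with (f:=f) (g:=g) in H. exact H.
Qed.

Lemma par_psubst P P' : par P P' -> forall s s', (forall i, par (s i) (s' i)) ->
  par (psubst s P) (psubst s' P').
Proof.
  induction 1; intros s s' Hs; simpl; try (constructor; auto; fail).
  - auto.
  - constructor. apply IHpar. intros [|i]; simpl; auto. apply par_ren, Hs.
  - constructor. apply IHpar. intros [|i]; simpl; auto. apply par_ren, Hs.
  - constructor. apply IHpar. intros i; unfold upn_psub; apply par_ren, Hs.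
  - rewrite psubst_psubst1. eapply par_beta.
    apply ac_psubst with (s := s) in H. exact H.
    apply IHpar1. intros [|i]; simpl; auto. apply par_ren, Hs. auto.
  - rewrite psubst_nsubst1. eapply par_nbeta.
    apply ac_psubst with (s := s) in H. exact H.
    apply IHpar. intros i; unfold upn_psub; apply par_ren, Hs.
Qed.

Lemma par_nsubst P P' : par P P' -> forall t, par (nsubst t P) (nsubst t P').
Proof.
  induction 1; intros t; simpl; try (constructor; auto; fail).
  - rewrite nsubst_psubst1. eapply par_beta; eauto.
    apply ac_nsubst with (s := t) in H. exact H.
  - rewrite nsubst_nsubst1. eapply par_nbeta; eauto.
    apply ac_nsubst with (s := t) in H. exact H.
Qed.

Lemma par_psubst1 Q Q' B B' : par Q Q' -> par B B' -> par (psubst1 Q B) (psubst1 Q' B').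
Proof.
  intros. apply par_psubst; auto. intros [|i]; simpl; auto.
Qed.

Ltac inv H := inversion H; subst; clear H.

Lemma ac_par_comm X X' : ac X X' ->
  (forall Y, par X Y -> exists Y', par X' Y' /\ ac Y Y') /\
  (forall Y', par X' Y' -> exists Y, par X Y /\ ac Y Y').
Proof.
  induction 1.
  - split; intros; eauto.
  - destruct IHac as [H1 H2]. split; intros Y HY.
    + destruct (H2 _ HY) as [Y' [? ?]]. eauto.
    + destruct (H1 _ HY) as [Y' [? ?]]. eauto.
  - destruct IHac1 as [H1 H2], IHac2 as [H3 H4]. split; intros Y HY.
    + destruct (H1 _ HY) as [Y1 [Ha Hb]]. destruct (H3 _ Ha) as [Y2 [? ?]]. eauto.
    + destruct (H4 _ HY) as [Y1 [Ha Hb]]. destruct (H2 _ Ha) as [Y2 [? ?]]. eauto.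
  - split; intros Y HY.
    + inv HY. match goal with h : par (Par Q R) _ |- _ => inv h end. eexists; split.
      apply par_par; [apply par_par|]; eassumption. apply ac_assoc.
    + inv HY. match goal with h : par (Par P Q) _ |- _ => inv h end. eexists; split.
      apply par_par; [|apply par_par]; eassumption. apply ac_assoc.
  - split; intros Y HY; inv HY; eexists; (split; [apply par_par; eassumption| apply ac_comm]).
  - split; intros Y HY.
    + inv HY. match goal with h : par Nil _ |- _ => inv h end. eauto.
    + exists (Par Y Nil). split. apply par_par; auto. apply ac_nil.
  - destruct IHac as [H1 H2]. split; intros Y HY; inv HY.
    + match goal with h : par P _ |- _ => destruct (H1 _ h) as [Y' [? ?]] end. eauto using par.
    + match goal with h : par P' _ |- _ => destruct (H2 _ h) as [Y' [? ?]] end. eauto using par.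
  - destruct IHac as [H1 H2]. split; intros Y HY; inv HY.
    + match goal with h : par Q _ |- _ => destruct (H1 _ h) as [Y' [? ?]] end. eauto using par.
    + match goal with h : par Q' _ |- _ => destruct (H2 _ h) as [Y' [? ?]] end. eauto using par.
  - destruct IHac1 as [H1 H2], IHac2 as [H3 H4]. split; intros Y HY; inv HY.
    + match goal with h : par P _ |- _ => destruct (H1 _ h) as [Ya [? ?]] end.
      match goal with h : par Q _ |- _ => destruct (H3 _ h) as [Yb [? ?]] end. eauto using par.
    + match goal with h : par P' _ |- _ => destruct (H2 _ h) as [Ya [? ?]] end.
      match goal with h : par Q' _ |- _ => destruct (H4 _ h) as [Yb [? ?]] end. eauto using par.
  - destruct IHac as [H1 H2]. split; intros Y HY; inv HY.
    + match goal with h : par P _ |- _ => destruct (H1 _ h) as [Y' [? ?]] end. eauto using par.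
    + match goal with h : par P' _ |- _ => destruct (H2 _ h) as [Y' [? ?]] end. eauto using par.
  - destruct IHac1 as [H1 H2], IHac2 as [H3 H4]. split; intros Y HY; inv HY.
    + match goal with h : par P _ |- _ => destruct (H1 _ h) as [Ya [? ?]] end.
      match goal with h : par Q _ |- _ => destruct (H3 _ h) as [Yb [? ?]] end. eauto using par.
    + match goal with h : par Q _ |- _ => destruct (H3 _ h) as [Yb [? ?]] end.
      match goal with h : ac P (PAbs ?B), h2 : par ?B ?B' |- _ =>
        exists (psubst1 Yb B'); split;
        [apply par_beta with B; [eapply ac_trans; [apply ac_sym, H| exact h] | exact h2 | assumption]
        | apply ac_psubst1; [assumption | apply ac_refl]] end.
    + match goal with h : par P' _ |- _ => destruct (H2 _ h) as [Ya [? ?]] end.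
      match goal with h : par Q' _ |- _ => destruct (H4 _ h) as [Yb [? ?]] end. eauto using par.
    + match goal with h : par Q' _ |- _ => destruct (H4 _ h) as [Yb [? ?]] end.
      match goal with h : ac P' (PAbs ?B), h2 : par ?B ?B' |- _ =>
        exists (psubst1 Yb B'); split;
        [apply par_beta with B; [eapply ac_trans; [apply H| exact h] | exact h2 | assumption]
        | apply ac_psubst1; [assumption | apply ac_refl]] end.
  - destruct IHac as [H1 H2]. split; intros Y HY; inv HY.
    + match goal with h : par P _ |- _ => destruct (H1 _ h) as [Y' [? ?]] end. eauto using par.
    + match goal with h : par P' _ |- _ => destruct (H2 _ h) as [Y' [? ?]] end. eauto using par.
  - destruct IHac as [H1 H2]. split; intros Y HY; inv HY.
    + match goal with h : par P _ |- _ => destruct (H1 _ h) as [Y' [? ?]] end. eauto using par.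
    + match goal with h : ac P (NAbs ?B), h2 : par ?B ?B' |- _ =>
        exists (nsubst1 n B'); split;
        [apply par_nbeta with B; [eapply ac_trans; [apply ac_sym, H| exact h] | exact h2]
        | apply ac_refl] end.
    + match goal with h : par P' _ |- _ => destruct (H2 _ h) as [Y' [? ?]] end. eauto using par.
    + match goal with h : ac P' (NAbs ?B), h2 : par ?B ?B' |- _ =>
        exists (nsubst1 n B'); split;
        [apply par_nbeta with B; [eapply ac_trans; [apply H| exact h] | exact h2]
        | apply ac_refl] end.
Qed.

Lemma ac_par_l X X' Y : ac X X' -> par X Y -> exists Y', par X' Y' /\ ac Y Y'.
Proof. intros H; apply (proj1 (ac_par_comm _ _ H)). Qed.

Lemma abs_par X B X' : ac X (PAbs B) -> par X X' -> exists B2, ac X' (PAbs B2) /\ par B B2.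
Proof.
  intros H1 H2. destruct (ac_par_l _ _ _ H1 H2) as [Y [HY HA]].
  inv HY. eauto.
Qed.

Lemma nabs_par X B X' : ac X (NAbs B) -> par X X' -> exists B2, ac X' (NAbs B2) /\ par B B2.
Proof.
  intros H1 H2. destruct (ac_par_l _ _ _ H1 H2) as [Y [HY HA]].
  inv HY. eauto.
Qed.

Lemma transport B0 B B1 : ac B0 B -> par B B1 -> exists B1', par B0 B1' /\ ac B1 B1'.
Proof. intros H1 H2. apply (ac_par_l _ _ _ (ac_sym _ _ H1) H2). Qed.

Definition diamond_at X := forall Y1 Y2, par X Y1 -> par X Y2 ->
  exists Z1 Z2, par Y1 Z1 /\ par Y2 Z2 /\ ac Z1 Z2.

Lemma beta_case X1 Q B B1 Q1 Y2 :
  (forall X0, size X0 < size (PApp X1 Q) -> diamond_at X0) ->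
  ac X1 (PAbs B) -> par B B1 -> par Q Q1 -> par (PApp X1 Q) Y2 ->
  exists Z1 Z2, par (psubst1 Q1 B1) Z1 /\ par Y2 Z2 /\ ac Z1 Z2.
Proof.
  intros IH HX HB HQ HY.
  destruct (ac_abs_inv _ _ HX) as [B0 [Hs0 HB0]].
  destruct (transport _ _ _ HB0 HB) as [B1' [HB1' HaB1]].
  assert (Hgen : forall C C2, ac B0 C -> par C C2 -> forall Q2, par Q Q2 ->
     exists Z1 W Zq, par (psubst1 Q1 B1) Z1 /\ par C2 W /\ par Q2 Zq /\ ac Z1 (psubst1 Zq W)).
  { intros C C2 HC HCC Q2 HQ2.
    destruct (transport _ _ _ HC HCC) as [C2' [HC2' HaC2]].
    destruct (IH B0 ltac:(simpl; lia) _ _ HB1' HC2') as [Zb1 [Zb2 [P1 [P2 A12]]]].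
    destruct (IH Q ltac:(simpl; lia) _ _ HQ HQ2) as [Zq1 [Zq2 [R1 [R2 A3]]]].
    destruct (ac_par_l _ _ _ (ac_sym _ _ HaB1) P1) as [W1 [PW1 AW1]].
    destruct (ac_par_l _ _ _ (ac_sym _ _ HaC2) P2) as [W2 [PW2 AW2]].
    exists (psubst1 Zq1 W1), W2, Zq2. split; [|split; [|split]]; auto.
    apply par_psubst1; auto.
    apply ac_psubst1; auto. eapply ac_trans; [apply ac_sym, AW1|]. eapply ac_trans; eauto. }
  inv HY.
  - match goal with h : par X1 ?X2 |- _ => destruct (abs_par _ _ _ HX h) as [B2 [HX2 HB2]] end.
    match goal with h : par Q ?Q2 |- _ =>
      destruct (Hgen _ _ HB0 HB2 _ h) as [Z1 [W [Zq [? [? [? ?]]]]]] end.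
    exists Z1, (psubst1 Zq W). split; auto. split; auto.
    eapply par_beta; eauto.
  - match goal with h : ac X1 (PAbs ?C), h2 : par ?C ?C2, h3 : par Q ?Q2 |- _ =>
      assert (HBC : ac B C) by
        (apply ac_prime_inv with (p := PAbs B) (q := PAbs C); simpl; auto;
         eapply ac_trans; [apply ac_sym, HX| exact h]);
      destruct (Hgen C C2 (ac_trans _ _ _ HB0 HBC) h2 _ h3) as [Z1 [W [Zq [? [? [? ?]]]]]] end.
    exists Z1, (psubst1 Zq W). split; auto. split; auto. apply par_psubst1; auto.
Qed.

Lemma nbeta_case X1 n B B1 Y2 :
  (forall X0, size X0 < size (NApp X1 n) -> diamond_at X0) ->
  ac X1 (NAbs B) -> par B B1 -> par (NApp X1 n) Y2 ->
  exists Z1 Z2, par (nsubst1 n B1) Z1 /\ par Y2 Z2 /\ ac Z1 Z2.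
Proof.
  intros IH HX HB HY.
  destruct (ac_nabs_inv _ _ HX) as [B0 [Hs0 HB0]].
  destruct (transport _ _ _ HB0 HB) as [B1' [HB1' HaB1]].
  assert (Hgen : forall C C2, ac B0 C -> par C C2 ->
     exists Z1 W, par (nsubst1 n B1) Z1 /\ par C2 W /\ ac Z1 (nsubst1 n W)).
  { intros C C2 HC HCC.
    destruct (transport _ _ _ HC HCC) as [C2' [HC2' HaC2]].
    destruct (IH B0 ltac:(simpl; lia) _ _ HB1' HC2') as [Zb1 [Zb2 [P1 [P2 A12]]]].
    destruct (ac_par_l _ _ _ (ac_sym _ _ HaB1) P1) as [W1 [PW1 AW1]].
    destruct (ac_par_l _ _ _ (ac_sym _ _ HaC2) P2) as [W2 [PW2 AW2]].
    exists (nsubst1 n W1), W2. split; [|split]; auto.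
    apply par_nsubst; auto.
    apply ac_nsubst. eapply ac_trans; [apply ac_sym, AW1|]. eapply ac_trans; eauto. }
  inv HY.
  - match goal with h : par X1 ?X2 |- _ => destruct (nabs_par _ _ _ HX h) as [B2 [HX2 HB2]] end.
    destruct (Hgen _ _ HB0 HB2) as [Z1 [W [? [? ?]]]].
    exists Z1, (nsubst1 n W). split; auto. split; auto.
    eapply par_nbeta; eauto.
  - match goal with h : ac X1 (NAbs ?C), h2 : par ?C ?C2 |- _ =>
      assert (HBC : ac B C) by
        (apply ac_prime_inv with (p := NAbs B) (q := NAbs C); simpl; auto;
         eapply ac_trans; [apply ac_sym, HX| exact h]);
      destruct (Hgen C C2 (ac_trans _ _ _ HB0 HBC) h2) as [Z1 [W [? [? ?]]]] end.
    exists Z1, (nsubst1 n W). split; auto. split; auto. apply par_nsubst; auto.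
Qed.

Lemma diamond_sym : forall Y1 Y2, (exists Z1 Z2, par Y1 Z1 /\ par Y2 Z2 /\ ac Z1 Z2) ->
  exists Z1 Z2, par Y2 Z1 /\ par Y1 Z2 /\ ac Z1 Z2.
Proof. intros Y1 Y2 [Z1 [Z2 [? [? ?]]]]. exists Z2, Z1; auto. Qed.

Ltac dia IH t := match goal with h1 : par t ?a, h2 : par t ?b |- _ =>
   destruct (IH t ltac:(simpl; lia) _ _ h1 h2) as [?Z1 [?Z2 [? [? ?]]]]; clear h1 h2 end.

Lemma diamond_all : forall n X, size X < n -> diamond_at X.
Proof.
  induction n; intros X Hs. lia.
  assert (IH : forall X0, size X0 < size X -> diamond_at X0) by (intros; apply IHn; lia).
  intros Y1 Y2 H1 H2.
  destruct H1.
  - inv H2. exists Nil, Nil; auto.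
  - inv H2. exists (PVar i), (PVar i); auto.
  - inv H2. dia IH P. eexists (Inp m _), (Inp m _); repeat split; try (constructor; eassumption); auto.
  - inv H2. dia IH Q. eexists (Out m _), (Out m _); repeat split; try (constructor; eassumption); auto.
  - inv H2. dia IH P. dia IH Q. eexists (Par _ _), (Par _ _); repeat split; try (constructor; eassumption); auto.
  - inv H2. dia IH P. eexists (PAbs _), (PAbs _); repeat split; try (constructor; eassumption); auto.
  - assert (Hb : par (PApp P Q) (PApp P' Q')) by (constructor; assumption).
    inv H2.
    + dia IH P. dia IH Q. eexists (PApp _ _), (PApp _ _); repeat split; try (constructor; eassumption); auto.
    + apply diamond_sym. eapply beta_case; eauto.
  - inv H2. dia IH P. eexists (NAbs _), (NAbs _); repeat split; try (constructor; eassumption); auto.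
  - assert (Hb : par (NApp P n0) (NApp P' n0)) by (constructor; assumption).
    inv H2.
    + dia IH P. eexists (NApp _ n0), (NApp _ n0); repeat split; try (constructor; eassumption); auto.
    + apply diamond_sym. eapply nbeta_case; eauto.
  - eapply beta_case; eauto.
  - eapply nbeta_case; eauto.
Qed.

Lemma diamond X Y1 Y2 : par X Y1 -> par X Y2 -> exists Z1 Z2, par Y1 Z1 /\ par Y2 Z2 /\ ac Z1 Z2.
Proof. apply (diamond_all (S (size X))). lia. Qed.

Inductive star (R : term -> term -> Prop) : term -> term -> Prop :=
| star_refl X : star R X X
| star_step X Y Z : R X Y -> star R Y Z -> star R X Z.
Hint Constructors star : core.

Lemma star_trans R X Y Z : star R X Y -> star R Y Z -> star R X Z.
Proof. induction 1; eauto. Qed.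

Lemma star_one (R : term -> term -> Prop) X Y : R X Y -> star R X Y.
Proof. eauto. Qed.

Lemma ac_parstar X X' Y : ac X X' -> star par X Y -> exists Y', star par X' Y' /\ ac Y Y'.
Proof.
  intros H HS; revert X' H; induction HS; intros X' HX.
  - exists X'; split; [apply star_refl | exact HX].
  - destruct (ac_par_l _ _ _ HX H) as [Y1 [? ?]].
    destruct (IHHS _ H1) as [Y2 [? ?]].
    exists Y2; split; [eapply star_step; eauto | auto].
Qed.

Lemma strip X Y1 Y2 : par X Y1 -> star par X Y2 ->
  exists Z1 Z2, star par Y1 Z1 /\ par Y2 Z2 /\ ac Z1 Z2.
Proof.
  intros H HS; revert Y1 H; induction HS; intros Y1 HY1.
  - exists Y1, Y1; split; [apply star_refl | split; [exact HY1 | apply ac_refl]].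
  - destruct (diamond _ _ _ HY1 H) as [W1 [W2 [? [? ?]]]].
    destruct (IHHS _ H1) as [V1 [V2 [? [? ?]]]].
    destruct (ac_parstar _ _ _ (ac_sym _ _ H2) H3) as [V1' [? ?]].
    exists V1', V2. split. eauto. split; auto. eapply ac_trans; [apply ac_sym|]; eauto.
Qed.

Lemma confluence X Y1 Y2 : star par X Y1 -> star par X Y2 ->
  exists Z1 Z2, star par Y1 Z1 /\ star par Y2 Z2 /\ ac Z1 Z2.
Proof.
  intros HS; revert Y2; induction HS; intros Y2 HY2.
  - exists Y2, Y2; split; [exact HY2 | split; [apply star_refl | apply ac_refl]].
  - destruct (strip _ _ _ H HY2) as [W1 [W2 [? [? ?]]]].
    destruct (IHHS _ H0) as [V1 [V2 [? [? ?]]]].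
    destruct (ac_parstar _ _ _ H2 H4) as [V2' [? ?]].
    exists V1, V2'. split; auto. split. eapply star_step; eauto. eapply ac_trans; eauto.
Qed.

Lemma star_cong1 (F : term -> term) : (forall P P', par P P' -> par (F P) (F P')) ->
  forall P P', star par P P' -> star par (F P) (F P').
Proof. intros HF P P' H; induction H; eauto. Qed.

Lemma star_cong2 (F : term -> term -> term) :
  (forall P P' Q Q', par P P' -> par Q Q' -> par (F P Q) (F P' Q')) ->
  forall P P' Q Q', star par P P' -> star par Q Q' -> star par (F P Q) (F P' Q').
Proof.
  intros HF P P' Q Q' H1 H2. apply star_trans with (F P' Q).
  apply (star_cong1 (fun x => F x Q)); auto.
  apply (star_cong1 (fun x => F P' x)); auto.
Qed.

Definition J P Q := exists Z1 Z2, star par P Z1 /\ star par Q Z2 /\ ac Z1 Z2.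

Lemma CR P Q : scong P Q -> J P Q.
Proof.
  unfold J. induction 1.
  - exists P, P; repeat split; auto.
  - destruct IHscong as [Z1 [Z2 [? [? ?]]]]. exists Z2, Z1; auto.
  - destruct IHscong1 as [Z1 [Z2 [? [? ?]]]]. destruct IHscong2 as [W1 [W2 [? [? ?]]]].
    destruct (confluence _ _ _ H2 H4) as [U1 [U2 [? [? ?]]]].
    destruct (ac_parstar _ _ _ (ac_sym _ _ H3) H7) as [U1' [Ha Hb]].
    destruct (ac_parstar _ _ _ H6 H8) as [U2' [Hc Hd]].
    exists U1', U2'. split. eapply star_trans; eauto. split. eapply star_trans; eauto.
    eapply ac_trans; [apply ac_sym, Hb|]. eapply ac_trans; eauto.
  - eexists _, _; repeat split; [apply star_refl | apply star_refl | apply ac_assoc].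
  - eexists _, _; repeat split; [apply star_refl | apply star_refl | apply ac_comm].
  - eexists _, _; repeat split; [apply star_refl | apply star_refl | apply ac_nil].
  - exists (psubst1 Q P), (psubst1 Q P); repeat split; auto.
    apply star_one. eapply par_beta; eauto.
  - exists (nsubst1 m P), (nsubst1 m P); repeat split; auto.
    apply star_one. eapply par_nbeta; eauto.
  - destruct IHscong as [Z1 [Z2 [? [? ?]]]]. exists (Inp m Z1), (Inp m Z2). repeat split; auto.
    apply (star_cong1 (Inp m)); [intros; constructor; auto | auto..]. apply (star_cong1 (Inp m)); [intros; constructor; auto | auto..].
  - destruct IHscong as [Z1 [Z2 [? [? ?]]]]. exists (Out m Z1), (Out m Z2). repeat split; auto.
    apply (star_cong1 (Out m)); [intros; constructor; auto | auto..]. apply (star_cong1 (Out m)); [intros; constructor; auto | auto..].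
  - destruct IHscong1 as [Z1 [Z2 [? [? ?]]]]. destruct IHscong2 as [W1 [W2 [? [? ?]]]].
    exists (Par Z1 W1), (Par Z2 W2). repeat split; auto.
    apply (star_cong2 Par); [intros; constructor; auto | auto..]. apply (star_cong2 Par); [intros; constructor; auto | auto..].
  - destruct IHscong as [Z1 [Z2 [? [? ?]]]]. exists (PAbs Z1), (PAbs Z2). repeat split; auto.
    apply (star_cong1 PAbs); [intros; constructor; auto | auto..]. apply (star_cong1 PAbs); [intros; constructor; auto | auto..].
  - destruct IHscong1 as [Z1 [Z2 [? [? ?]]]]. destruct IHscong2 as [W1 [W2 [? [? ?]]]].
    exists (PApp Z1 W1), (PApp Z2 W2). repeat split; auto.
    apply (star_cong2 PApp); [intros; constructor; auto | auto..]. apply (star_cong2 PApp); [intros; constructor; auto | auto..].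
  - destruct IHscong as [Z1 [Z2 [? [? ?]]]]. exists (NAbs Z1), (NAbs Z2). repeat split; auto.
    apply (star_cong1 NAbs); [intros; constructor; auto | auto..]. apply (star_cong1 NAbs); [intros; constructor; auto | auto..].
  - destruct IHscong as [Z1 [Z2 [? [? ?]]]]. exists (NApp Z1 n), (NApp Z2 n). repeat split; auto.
    apply (star_cong1 (fun x => NApp x n)); [intros; constructor; auto | auto..]. apply (star_cong1 (fun x => NApp x n)); [intros; constructor; auto | auto..].
Qed.

Lemma star_par_scong P Q : star par P Q -> scong P Q.
Proof. induction 1; eauto using scong, par_scong. Qed.


Inductive D : term -> term -> Prop :=
| D_nil : D Nil Nil
| D_pvar i : D (PVar i) (PVar i)
| D_inp m P P' : D P P' -> D (Inp m P) (Inp m P')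
| D_out m Q Q' : D Q Q' -> D (Out m Q) (Out m Q')
| D_par P P' Q Q' Y : D P P' -> D Q Q' -> ac Y (Par P' Q') -> D (Par P Q) Y
| D_pabs P P' : D P P' -> D (PAbs P) (PAbs P')
| D_papp P P' Q Q' : D P P' -> D Q Q' -> D (PApp P Q) (PApp P' Q')
| D_nabs P P' : D P P' -> D (NAbs P) (NAbs P')
| D_napp P P' n : D P P' -> D (NApp P n) (NApp P' n)
| D_dis m X0 Y Ps : Ps <> [] -> ac Y (prod (map (Inp m) Ps)) ->
    (forall p rest, Permutation Ps (p :: rest) ->
       EQ X0 (Par p (liftP (prod (map (Inp m) rest))))) ->
    D (Inp m X0) Y
with EQ : term -> term -> Prop :=
| EQ_sc P Q : scong P Q -> EQ P Q
| EQ_D P Q : D P Q -> EQ P Q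
| EQ_sym P Q : EQ P Q -> EQ Q P
| EQ_trans P Q R : EQ P Q -> EQ Q R -> EQ P R.

Scheme D_ind2 := Induction for D Sort Prop
with EQ_ind2 := Induction for EQ Sort Prop.
Combined Scheme DEQ_ind from D_ind2, EQ_ind2.

Lemma D_refl P : D P P.
Proof. induction P; econstructor; eauto. Qed.
Hint Resolve D_refl : core.

Lemma EQ_refl P : EQ P P.
Proof. apply EQ_sc, sc_refl. Qed.

Lemma EQ_ac P Q : ac P Q -> EQ P Q.
Proof. intros; apply EQ_sc, ac_scong; auto. Qed.

Lemma EQ_ctx (F : term -> term) :
  (forall x y, scong x y -> scong (F x) (F y)) ->
  (forall x y, D x y -> D (F x) (F y)) ->
  forall x y, EQ x y -> EQ (F x) (F y).
Proof.
  intros H1 H2 x y H. induction H.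
  apply EQ_sc; auto. apply EQ_D; auto. apply EQ_sym; auto. eapply EQ_trans; eauto.
Qed.

Lemma EQ_par a a' b b' : EQ a a' -> EQ b b' -> EQ (Par a b) (Par a' b').
Proof.
  intros H1 H2. apply EQ_trans with (Par a' b).
  apply (EQ_ctx (fun x => Par x b)); [intros; apply sc_par; [assumption|apply sc_refl] | intros; econstructor; eauto | assumption].
  apply (EQ_ctx (fun x => Par a' x)); [intros; apply sc_par; [apply sc_refl|assumption] | intros; econstructor; eauto | assumption].
Qed.

Lemma ren_Inp_map f g m l :
  map (ren f g) (map (Inp m) l) = map (Inp (ren_name g m)) (map (ren (up_ren f) g) l).
Proof. rewrite !map_map. reflexivity. Qed.

Lemma D_ren_mut :
  (forall P Q, D P Q -> forall f g, D (ren f g P) (ren f g Q)) /\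
  (forall P Q, EQ P Q -> forall f g, EQ (ren f g P) (ren f g Q)).
Proof.
  apply (DEQ_ind (fun P Q _ => forall f g, D (ren f g P) (ren f g Q))
                      (fun P Q _ => forall f g, EQ (ren f g P) (ren f g Q)))
    ; try (intros; simpl; constructor; auto; fail).
  - intros P P' Q Q' Y _ IH1 _ IH2 Hac f g. simpl.
    apply D_par with (ren f g P') (ren f g Q'); [apply IH1; auto | apply IH2; auto |].
    apply ac_ren with (f := f) (g := g) in Hac. exact Hac.
  - intros m X0 Y Ps Hne Hac HEQ IH f g. simpl.
    apply D_dis with (Ps := map (ren (up_ren f) g) Ps).
    + destruct Ps; simpl; congruence.
    + apply ac_ren with (f := f) (g := g) in Hac. rewrite ren_prod, ren_Inp_map in Hac. exact Hac.
    + intros p rest Hp. apply Permutation_sym in Hp.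
      apply Permutation_map_inv in Hp. destruct Hp as [l3 [Heq Hp]].
      destruct l3 as [|p0 rest0]; simpl in Heq; inversion Heq; subst.
      specialize (IH p0 rest0 Hp (up_ren f) g).
      simpl in IH. unfold liftP in IH |- *. rewrite ren_ren in IH.
      replace (ren S (fun i => i) (prod (map (Inp (ren_name g m)) (map (ren (up_ren f) g) rest0))))
        with (ren (fun i => up_ren f (S i)) (fun i => g i) (prod (map (Inp m) rest0))). exact IH.
      rewrite <- ren_Inp_map, <- ren_prod, ren_ren. reflexivity.
  - intros. apply EQ_sc, scong_ren; auto.
  - intros. eapply EQ_trans; eauto.
Qed.

Lemma D_ren P Q f g : D P Q -> D (ren f g P) (ren f g Q).
Proof. intros H; apply (proj1 D_ren_mut); auto. Qed.

Lemma EQ_ren P Q f g : EQ P Q -> EQ (ren f g P) (ren f g Q).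
Proof. intros H; apply (proj2 D_ren_mut); auto. Qed.

Lemma EQ_lift P Q : EQ P Q -> EQ (liftP P) (liftP Q).
Proof. apply EQ_ren. Qed.

Lemma D_psubst_refl P : forall s s', (forall i, D (s i) (s' i)) -> D (psubst s P) (psubst s' P).
Proof.
  induction P; intros s s' H; simpl.
  - constructor.
  - auto.
  - constructor. apply IHP. intros [|i]; simpl. constructor. apply D_ren, H.
  - constructor; auto.
  - econstructor; [apply IHP1; auto | apply IHP2; auto | apply ac_refl].
  - constructor. apply IHP. intros [|i]; simpl. constructor. apply D_ren, H.
  - constructor; auto.
  - constructor. apply IHP. intros i; unfold upn_psub; apply D_ren, H.
  - constructor; auto.
Qed.

Lemma psubst_Inp_map s m l :
  map (psubst s) (map (Inp m) l) = map (Inp m) (map (psubst (up_psub s)) l).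
Proof. rewrite !map_map. reflexivity. Qed.

Lemma D_psubst_mut :
  (forall P Q, D P Q -> forall s s', (forall i, D (s i) (s' i)) -> D (psubst s P) (psubst s' Q)) /\
  (forall P Q, EQ P Q -> forall s, EQ (psubst s P) (psubst s Q)).
Proof.
  apply (DEQ_ind (fun P Q _ => forall s s', (forall i, D (s i) (s' i)) -> D (psubst s P) (psubst s' Q))
                 (fun P Q _ => forall s, EQ (psubst s P) (psubst s Q))).
  - intros; simpl; constructor.
  - intros; simpl; auto.
  - intros m P P' _ IH s s' H; simpl; constructor. apply IH.
    intros [|i]; simpl. constructor. apply D_ren, H.
  - intros; simpl; constructor; auto.
  - intros P P' Q Q' Y _ IH1 _ IH2 Hac s s' H. simpl.
    apply D_par with (psubst s' P') (psubst s' Q'); [apply IH1; auto | apply IH2; auto |].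
    apply ac_psubst with (s := s') in Hac. exact Hac.
  - intros P P' _ IH s s' H; simpl; constructor. apply IH.
    intros [|i]; simpl. constructor. apply D_ren, H.
  - intros; simpl; constructor; auto.
  - intros P P' _ IH s s' H; simpl; constructor. apply IH.
    intros i; unfold upn_psub; apply D_ren, H.
  - intros; simpl; constructor; auto.
  - intros m X0 Y Ps Hne Hac HEQ IH s s' Hs. simpl.
    apply D_dis with (Ps := map (psubst (up_psub s')) Ps).
    + destruct Ps; simpl; congruence.
    + apply ac_psubst with (s := s') in Hac. rewrite psubst_prod, psubst_Inp_map in Hac. exact Hac.
    + intros p rest Hp. apply Permutation_sym in Hp.
      apply Permutation_map_inv in Hp. destruct Hp as [l3 [Heq Hp]].
      destruct l3 as [|p0 rest0]; simpl in Heq; inversion Heq; subst.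
      specialize (IH p0 rest0 Hp (up_psub s)).
      eapply EQ_trans; [exact IH|]. apply EQ_D.
      replace (Par (psubst (up_psub s') p0)
                (liftP (prod (map (Inp m) (map (psubst (up_psub s')) rest0)))))
        with (psubst (up_psub s') (Par p0 (liftP (prod (map (Inp m) rest0))))).
      apply D_psubst_refl. intros [|i]; simpl. constructor. apply D_ren, Hs.
      simpl. rewrite <- liftP_psubst, psubst_prod, psubst_Inp_map. reflexivity.
  - intros. apply EQ_sc, scong_psubst; auto.
  - intros P Q _ IH s. apply EQ_D, IH. auto.
  - intros. apply EQ_sym; auto.
  - intros. eapply EQ_trans; eauto.
Qed.

Lemma D_psubst P Q s s' : D P Q -> (forall i, D (s i) (s' i)) -> D (psubst s P) (psubst s' Q).
Proof. intros; apply (proj1 D_psubst_mut); auto. Qed.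

Lemma D_psubst1 Q Q' B B' : D Q Q' -> D B B' -> D (psubst1 Q B) (psubst1 Q' B').
Proof. intros. apply D_psubst; auto. intros [|i]; simpl; auto. Qed.

Lemma nsubst_Inp_map t m l :
  map (nsubst t) (map (Inp m) l) = map (Inp (subst_name t m)) (map (nsubst t) l).
Proof. rewrite !map_map. reflexivity. Qed.

Lemma D_nsubst_mut :
  (forall P Q, D P Q -> forall t, D (nsubst t P) (nsubst t Q)) /\
  (forall P Q, EQ P Q -> forall t, EQ (nsubst t P) (nsubst t Q)).
Proof.
  apply (DEQ_ind (fun P Q _ => forall t, D (nsubst t P) (nsubst t Q))
                 (fun P Q _ => forall t, EQ (nsubst t P) (nsubst t Q))).
  all: try (intros; simpl; constructor; auto; fail).
  - intros P P' Q Q' Y _ IH1 _ IH2 Hac t. simpl.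
    apply D_par with (nsubst t P') (nsubst t Q'); [apply IH1; auto | apply IH2; auto |].
    apply ac_nsubst with (s := t) in Hac. exact Hac.
  - intros m X0 Y Ps Hne Hac HEQ IH t. simpl.
    apply D_dis with (Ps := map (nsubst t) Ps).
    + destruct Ps; simpl; congruence.
    + apply ac_nsubst with (s := t) in Hac. rewrite nsubst_prod, nsubst_Inp_map in Hac. exact Hac.
    + intros p rest Hp. apply Permutation_sym in Hp.
      apply Permutation_map_inv in Hp. destruct Hp as [l3 [Heq Hp]].
      destruct l3 as [|p0 rest0]; simpl in Heq; inversion Heq; subst.
      specialize (IH p0 rest0 Hp t). simpl in IH.
      rewrite <- liftP_nsubst, nsubst_prod, nsubst_Inp_map in IH. exact IH.
  - intros. apply EQ_sc, scong_nsubst; auto.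
  - intros. eapply EQ_trans; eauto.
Qed.

Lemma D_nsubst P Q t : D P Q -> D (nsubst t P) (nsubst t Q).
Proof. intros; apply (proj1 D_nsubst_mut); auto. Qed.

Lemma EQ_scong P Q : scong P Q -> EQ P Q.
Proof. apply EQ_sc. Qed.

Lemma D_dis_left m X0 X0' Y Ps : Ps <> [] -> ac Y (prod (map (Inp m) Ps)) ->
    (forall p rest, Permutation Ps (p :: rest) ->
       EQ X0 (Par p (liftP (prod (map (Inp m) rest))))) ->
    EQ X0 X0' -> D (Inp m X0') Y.
Proof.
  intros H1 H2 H3 H4. apply D_dis with Ps; auto.
  intros. eapply EQ_trans; [apply EQ_sym, H4|]. auto.
Qed.



Lemma primes_prod l : Forall isprime l -> primes (prod l) = l.
Proof.
  induction 1 as [|x l Hx Hl IH]; simpl. reflexivity.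
  destruct l as [|y l]. destruct x; simpl in *; try contradiction; reflexivity.
  simpl in *. rewrite IH. destruct x; simpl in *; try contradiction; reflexivity.
Qed.

Lemma Forall_inps m Ps : Forall isprime (map (Inp m) Ps).
Proof. induction Ps; simpl; constructor; simpl; auto. Qed.

Lemma PR_nil_r l : PR l [] -> l = [].
Proof. intros [k [Hp HF]]. inversion HF; subst. apply Permutation_nil; apply Permutation_sym; auto. Qed.

Lemma PR_nil_l l : PR [] l -> l = [].
Proof. intros [k [Hp HF]]. apply Permutation_nil in Hp. subst. inversion HF; auto. Qed.

Lemma ac_nil_primes X : primes X = [] -> ac X Nil.
Proof. intros H. apply PR_ac. rewrite H. simpl. exists []; auto. Qed.

Lemma ac_nil_primes_inv X : ac X Nil -> primes X = [].
Proof. intros H. apply ac_primes in H. simpl in H. apply PR_nil_r; auto. Qed.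

Lemma ac_prime_form X q : isprime q -> ac X q -> exists y, primes X = [y] /\ acprime y q.
Proof.
  intros Hq H. apply ac_primes in H.
  replace (primes q) with [q] in H by (destruct q; simpl in *; try contradiction; reflexivity).
  apply PR_sym in H. apply PR_single_inv in H. destruct H as [y [Hy Ha]].
  exists y; split; auto. apply acprime_sym; auto.
Qed.

Lemma ac_of_prime_form X y : primes X = [y] -> isprime y -> ac X y.
Proof.
  intros H Hy. apply PR_ac. rewrite H.
  replace (primes y) with [y] by (destruct y; simpl in *; try contradiction; reflexivity).
  apply PR_refl. repeat constructor; auto.
Qed.

Lemma ac_par_single a b q : isprime q -> ac (Par a b) q ->
  (primes a = [] /\ ac b q) \/ (primes b = [] /\ ac a q).
Proof.
  intros Hq H. destruct (ac_prime_form _ _ Hq H) as [y [Hy Ha]]. simpl in Hy.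
  assert (Hyp : isprime y).
  { assert (Forall isprime (primes (Par a b))) by apply primes_isprime.
    simpl in H0. rewrite Hy in H0. inversion H0; auto. }
  apply app_eq_unit in Hy. destruct Hy as [[Ha1 Ha2]|[Ha1 Ha2]].
  - left. split; auto. eapply ac_trans; [apply ac_of_prime_form; eauto|]. apply acprime_ac; auto.
  - right. split; auto. eapply ac_trans; [apply ac_of_prime_form; eauto|]. apply acprime_ac; auto.
Qed.

Lemma isprime_ac_nil_false q : isprime q -> ac q Nil -> False.
Proof.
  intros Hq H. apply ac_nil_primes_inv in H. destruct q; simpl in *; try contradiction; discriminate.
Qed.

Lemma D_nilL X Y : D X Y -> primes X = [] -> primes Y = [].
Proof.
  induction 1; simpl; intros Hn; try discriminate; auto.
  apply app_eq_nil in Hn. destruct Hn as [Ha Hb].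
  apply ac_nil_primes_inv. match goal with h : ac _ (Par _ _) |- _ => eapply ac_trans; [exact h|] end.
  eapply ac_trans; [apply ac_par; apply ac_nil_primes; eauto|]. apply ac_nil.
Qed.

Lemma primes_prod_inps m Ps : primes (prod (map (Inp m) Ps)) = map (Inp m) Ps.
Proof. apply primes_prod, Forall_inps. Qed.

Lemma D_nilR X Y : D X Y -> primes Y = [] -> primes X = [].
Proof.
  induction 1; simpl; intros Hn; try discriminate; auto.
  - apply ac_nil_primes in Hn. assert (Hx : ac (Par P' Q') Nil) by eauto.
    apply ac_nil_primes_inv in Hx. simpl in Hx. apply app_eq_nil in Hx. destruct Hx.
    rewrite IHD1, IHD2; auto.
  - apply ac_nil_primes in Hn. assert (Hx : ac (prod (map (Inp m) Ps)) Nil) by eauto.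
    apply ac_nil_primes_inv in Hx. rewrite primes_prod_inps in Hx.
    destruct Ps; simpl in Hx; congruence.
Qed.

Lemma acprime_inp_l m P q : acprime (Inp m P) q -> exists P', q = Inp m P' /\ ac P P'.
Proof. destruct q; simpl; intuition; subst; eauto. Qed.

Ltac absurd_ac :=
  match goal with
  | H : ac Nil ?q |- _ => exfalso; apply (isprime_ac_nil_false q); [exact I| apply ac_sym; exact H]
  | H : ac ?q Nil |- _ => exfalso; apply (isprime_ac_nil_false q); [exact I| exact H]
  | H : ac _ _ |- _ => apply ac_prime_inv in H; [simpl in H; contradiction | exact I | exact I]
  end.

Lemma D_abs_left X1 Y1 : D X1 Y1 -> forall B, ac X1 (PAbs B) ->
  exists B0 C0, size B0 < size X1 /\ ac B0 B /\ D B0 C0 /\ ac Y1 (PAbs C0).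
Proof.
  induction 1; intros B HB; try absurd_ac.
  - destruct (ac_par_single _ _ _ (I : isprime (PAbs B)) HB) as [[Hn Hq]|[Hn Hq]].
    + destruct (IHD2 _ Hq) as [B0 [C0 [Hs [Ha [Hd Hc]]]]].
      exists B0, C0. split. simpl; lia. split; auto. split; auto.
      eapply ac_trans; [exact H1|]. apply D_nilL in H; auto. apply ac_nil_primes in H.
      eapply ac_trans; [apply ac_par; [exact H | apply ac_refl]|].
      eapply ac_trans; [apply ac_comm|]. eapply ac_trans; [apply ac_nil|]. auto.
    + destruct (IHD1 _ Hq) as [B0 [C0 [Hs [Ha [Hd Hc]]]]].
      exists B0, C0. split. simpl; lia. split; auto. split; auto.
      eapply ac_trans; [exact H1|]. apply D_nilL in H0; auto. apply ac_nil_primes in H0.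
      eapply ac_trans; [apply ac_par; [apply ac_refl | exact H0]|].
      eapply ac_trans; [apply ac_nil|]. auto.
  - apply ac_prime_inv in HB; simpl in HB; [|exact I|exact I].
    exists P, P'. split. simpl; lia. auto.
Qed.

Lemma D_nabs_left X1 Y1 : D X1 Y1 -> forall B, ac X1 (NAbs B) ->
  exists B0 C0, size B0 < size X1 /\ ac B0 B /\ D B0 C0 /\ ac Y1 (NAbs C0).
Proof.
  induction 1; intros B HB; try absurd_ac.
  - destruct (ac_par_single _ _ _ (I : isprime (NAbs B)) HB) as [[Hn Hq]|[Hn Hq]].
    + destruct (IHD2 _ Hq) as [B0 [C0 [Hs [Ha [Hd Hc]]]]].
      exists B0, C0. split. simpl; lia. split; auto. split; auto.
      eapply ac_trans; [exact H1|]. apply D_nilL in H; auto. apply ac_nil_primes in H.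
      eapply ac_trans; [apply ac_par; [exact H | apply ac_refl]|].
      eapply ac_trans; [apply ac_comm|]. eapply ac_trans; [apply ac_nil|]. auto.
    + destruct (IHD1 _ Hq) as [B0 [C0 [Hs [Ha [Hd Hc]]]]].
      exists B0, C0. split. simpl; lia. split; auto. split; auto.
      eapply ac_trans; [exact H1|]. apply D_nilL in H0; auto. apply ac_nil_primes in H0.
      eapply ac_trans; [apply ac_par; [apply ac_refl | exact H0]|].
      eapply ac_trans; [apply ac_nil|]. auto.
  - apply ac_prime_inv in HB; simpl in HB; [|exact I|exact I].
    exists P, P'. split. simpl; lia. auto.
Qed.

Lemma ac_prod_inps_single m Ps q : isprime q -> ac (prod (map (Inp m) Ps)) q ->
  exists p, Ps = [p] /\ acprime (Inp m p) q.
Proof.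
  intros Hq H. destruct (ac_prime_form _ _ Hq H) as [y [Hy Ha]].
  rewrite primes_prod_inps in Hy. destruct Ps as [|p [|p' Ps]]; simpl in Hy; inversion Hy; subst.
  eauto.
Qed.

Lemma D_abs_right X1 Y1 : D X1 Y1 -> forall C, ac Y1 (PAbs C) ->
  exists B0 C0, size B0 < size X1 /\ ac X1 (PAbs B0) /\ D B0 C0 /\ ac C0 C.
Proof.
  induction 1; intros C HC; try absurd_ac.
  - assert (HC' : ac (Par P' Q') (PAbs C)) by eauto.
    destruct (ac_par_single _ _ _ (I : isprime (PAbs C)) HC') as [[Hn Hq]|[Hn Hq]].
    + destruct (IHD2 _ Hq) as [B0 [C0 [Hs [Ha [Hd Hc]]]]].
      exists B0, C0. split. simpl; lia. split; auto.
      apply D_nilR in H; auto. apply ac_nil_primes in H.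
      eapply ac_trans; [apply ac_par; [exact H | apply ac_refl]|].
      eapply ac_trans; [apply ac_comm|]. eapply ac_trans; [apply ac_nil|]. auto.
    + destruct (IHD1 _ Hq) as [B0 [C0 [Hs [Ha [Hd Hc]]]]].
      exists B0, C0. split. simpl; lia. split; auto.
      apply D_nilR in H0; auto. apply ac_nil_primes in H0.
      eapply ac_trans; [apply ac_par; [apply ac_refl | exact H0]|].
      eapply ac_trans; [apply ac_nil|]. auto.
  - apply ac_prime_inv in HC; simpl in HC; [|exact I|exact I].
    exists P, P'. split. simpl; lia. auto.
  - assert (HC' : ac (prod (map (Inp m) Ps)) (PAbs C)) by eauto.
    destruct (ac_prod_inps_single _ _ _ (I : isprime (PAbs C)) HC') as [p [_ Hp]]. contradiction.
Qed.

Lemma D_nabs_right X1 Y1 : D X1 Y1 -> forall C, ac Y1 (NAbs C) ->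
  exists B0 C0, size B0 < size X1 /\ ac X1 (NAbs B0) /\ D B0 C0 /\ ac C0 C.
Proof.
  induction 1; intros C HC; try absurd_ac.
  - assert (HC' : ac (Par P' Q') (NAbs C)) by eauto.
    destruct (ac_par_single _ _ _ (I : isprime (NAbs C)) HC') as [[Hn Hq]|[Hn Hq]].
    + destruct (IHD2 _ Hq) as [B0 [C0 [Hs [Ha [Hd Hc]]]]].
      exists B0, C0. split. simpl; lia. split; auto.
      apply D_nilR in H; auto. apply ac_nil_primes in H.
      eapply ac_trans; [apply ac_par; [exact H | apply ac_refl]|].
      eapply ac_trans; [apply ac_comm|]. eapply ac_trans; [apply ac_nil|]. auto.
    + destruct (IHD1 _ Hq) as [B0 [C0 [Hs [Ha [Hd Hc]]]]].
      exists B0, C0. split. simpl; lia. split; auto.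
      apply D_nilR in H0; auto. apply ac_nil_primes in H0.
      eapply ac_trans; [apply ac_par; [apply ac_refl | exact H0]|].
      eapply ac_trans; [apply ac_nil|]. auto.
  - apply ac_prime_inv in HC; simpl in HC; [|exact I|exact I].
    exists P, P'. split. simpl; lia. auto.
  - assert (HC' : ac (prod (map (Inp m) Ps)) (NAbs C)) by eauto.
    destruct (ac_prod_inps_single _ _ _ (I : isprime (NAbs C)) HC') as [p [_ Hp]]. contradiction.
Qed.

Lemma D_pvar_left X Y i : D X Y -> ac X (PVar i) -> ac Y (PVar i).
Proof.
  induction 1; intros HB; try absurd_ac.
  - auto.
  - destruct (ac_par_single _ _ _ (I : isprime (PVar i)) HB) as [[Hn Hq]|[Hn Hq]].
    + eapply ac_trans; [exact H1|]. apply D_nilL in H; auto. apply ac_nil_primes in H.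
      eapply ac_trans; [apply ac_par; [exact H | apply ac_refl]|].
      eapply ac_trans; [apply ac_comm|]. eapply ac_trans; [apply ac_nil|]. auto.
    + eapply ac_trans; [exact H1|]. apply D_nilL in H0; auto. apply ac_nil_primes in H0.
      eapply ac_trans; [apply ac_par; [apply ac_refl | exact H0]|].
      eapply ac_trans; [apply ac_nil|]. auto.
Qed.

Lemma D_pvar_right X Y i : D X Y -> ac Y (PVar i) -> ac X (PVar i).
Proof.
  induction 1; intros HC; try absurd_ac.
  - auto.
  - assert (HC' : ac (Par P' Q') (PVar i)) by eauto.
    destruct (ac_par_single _ _ _ (I : isprime (PVar i)) HC') as [[Hn Hq]|[Hn Hq]].
    + apply D_nilR in H; auto. apply ac_nil_primes in H.
      eapply ac_trans; [apply ac_par; [exact H | apply ac_refl]|].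
      eapply ac_trans; [apply ac_comm|]. eapply ac_trans; [apply ac_nil|]. auto.
    + apply D_nilR in H0; auto. apply ac_nil_primes in H0.
      eapply ac_trans; [apply ac_par; [apply ac_refl | exact H0]|].
      eapply ac_trans; [apply ac_nil|]. auto.
  - assert (HC' : ac (prod (map (Inp m) Ps)) (PVar i)) by eauto.
    destruct (ac_prod_inps_single _ _ _ (I : isprime (PVar i)) HC') as [p [_ Hp]]. contradiction.
Qed.

Definition red := star (fun a b => par a b \/ ac a b).

Lemma red_scong a b : red a b -> scong a b.
Proof.
  induction 1. apply sc_refl. destruct H.
  eapply sc_trans; [apply par_scong; eauto| auto].
  eapply sc_trans; [apply ac_scong; eauto| auto].
Qed.

Lemma red_trans a b c : red a b -> red b c -> red a c.
Proof. apply star_trans. Qed.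

Lemma red_par1 a b : par a b -> red a b.
Proof. intros; eapply star_step; [left; eauto| apply star_refl]. Qed.

Lemma red_ac1 a b : ac a b -> red a b.
Proof. intros; eapply star_step; [right; eauto| apply star_refl]. Qed.

Lemma red_refl a : red a a.
Proof. apply star_refl. Qed.

Lemma red_cong1 (F : term -> term) :
  (forall x y, par x y -> par (F x) (F y)) -> (forall x y, ac x y -> ac (F x) (F y)) ->
  forall x y, red x y -> red (F x) (F y).
Proof.
  intros H1 H2 x y H. induction H. apply star_refl.
  apply star_step with (F Y); [destruct H; [left|right]; auto | exact IHstar].
Qed.

Lemma red_cong2 (F : term -> term -> term) :
  (forall x y z, par x y -> par (F x z) (F y z)) -> (forall x y z, ac x y -> ac (F x z) (F y z)) ->
  (forall x y z, par x y -> par (F z x) (F z y)) -> (forall x y z, ac x y -> ac (F z x) (F z y)) ->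
  forall x y x' y', red x y -> red x' y' -> red (F x x') (F y y').
Proof.
  intros H1 H2 H3 H4 x y x' y' Ha Hb. apply red_trans with (F y x').
  apply (red_cong1 (fun u => F u x')); auto.
  apply (red_cong1 (fun u => F y u)); auto.
Qed.

Lemma red_inp m a b : red a b -> red (Inp m a) (Inp m b).
Proof. apply red_cong1; intros; constructor; auto. Qed.
Lemma red_out m a b : red a b -> red (Out m a) (Out m b).
Proof. apply red_cong1; intros; constructor; auto. Qed.
Lemma red_pabs a b : red a b -> red (PAbs a) (PAbs b).
Proof. apply red_cong1; intros; constructor; auto. Qed.
Lemma red_nabs a b : red a b -> red (NAbs a) (NAbs b).
Proof. apply red_cong1; intros; constructor; auto. Qed.
Lemma red_napp n a b : red a b -> red (NApp a n) (NApp b n).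
Proof. apply (red_cong1 (fun x => NApp x n)); intros; constructor; auto. Qed.
Lemma red_par a b c d : red a b -> red c d -> red (Par a c) (Par b d).
Proof. apply red_cong2; intros; constructor; auto. Qed.
Lemma red_papp a b c d : red a b -> red c d -> red (PApp a c) (PApp b d).
Proof. apply red_cong2; intros; constructor; auto. Qed.
Lemma red_psubst1 a b c d : red a b -> red c d -> red (psubst1 a c) (psubst1 b d).
Proof.
  apply red_cong2; intros.
  - apply par_psubst1; auto.
  - apply ac_psubst1; auto.
  - apply par_psubst1; auto.
  - apply ac_psubst1; auto.
Qed.
Lemma red_nsubst1 n a b : red a b -> red (nsubst1 n a) (nsubst1 n b).
Proof.
  apply red_cong1; intros. apply par_nsubst; auto. apply ac_nsubst; auto.
Qed.

Lemma par_prod_inp m Ps W : par (prod (map (Inp m) Ps)) W ->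
  exists Ps', W = prod (map (Inp m) Ps') /\ Forall2 par Ps Ps'.
Proof.
  revert W; induction Ps as [|p Ps IH]; intros W H; simpl in H.
  - inv H. exists []; auto.
  - destruct Ps as [|p' Ps].
    + inv H. exists [P']; auto.
    + inv H. match goal with h : par (Inp m p) _ |- _ => inv h end.
      match goal with h : par _ Q' |- _ => destruct (IH _ h) as [Ps' [-> HF]] end.
      exists (P'0 :: Ps'). split; auto.
      destruct Ps' as [|q Ps']. inversion HF. reflexivity.
Qed.

Lemma par_prod_map m l l' : Forall2 par l l' -> par (prod (map (Inp m) l)) (prod (map (Inp m) l')).
Proof.
  induction 1. constructor.
  simpl. destruct l, l'; simpl in *; try (inversion H0; fail); constructor; auto; constructor; auto.
Qed.

Lemma D6 : forall n X, size X < n -> forall Y X', D X Y -> par X X' ->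
  exists X'' Y', ac X' X'' /\ red Y Y' /\ D X'' Y'.
Proof.
  induction n; intros X Hs Y X' HD HP. lia.
  assert (IH : forall X0, size X0 < size X -> forall Y X', D X0 Y -> par X0 X' ->
    exists X'' Y', ac X' X'' /\ red Y Y' /\ D X'' Y') by (intros; apply (IHn X0); auto; lia).
  clear IHn.
  destruct HD.
  - inv HP. exists Nil, Nil. split; [apply ac_refl|split; [apply red_refl|constructor]].
  - inv HP. exists (PVar i), (PVar i). split; [apply ac_refl|split; [apply red_refl|constructor]].
  - inv HP. match goal with h : par P _ |- _ =>
      destruct (IH P ltac:(simpl; lia) _ _ HD h) as [P2 [P3 [Ha [Hr Hd]]]] end.
    exists (Inp m P2), (Inp m P3). split; [apply ac_inp; auto|split; [apply red_inp; auto|constructor; auto]].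
  - inv HP. match goal with h : par Q _ |- _ =>
      destruct (IH Q ltac:(simpl; lia) _ _ HD h) as [P2 [P3 [Ha [Hr Hd]]]] end.
    exists (Out m P2), (Out m P3). split; [apply ac_out; auto|split; [apply red_out; auto|constructor; auto]].
  - inv HP. match goal with h : par P _ |- _ =>
      destruct (IH P ltac:(simpl; lia) _ _ HD1 h) as [P2 [P3 [Ha [Hr Hd]]]] end.
    match goal with h : par Q _ |- _ =>
      destruct (IH Q ltac:(simpl; lia) _ _ HD2 h) as [Q2 [Q3 [Ha' [Hr' Hd']]]] end.
    exists (Par P2 Q2), (Par P3 Q3). split; [apply ac_par; auto|split].
    eapply red_trans; [apply red_ac1; eauto| apply red_par; auto].
    apply D_par with P3 Q3; auto; apply ac_refl.
  - inv HP. match goal with h : par P _ |- _ =>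
      destruct (IH P ltac:(simpl; lia) _ _ HD h) as [P2 [P3 [Ha [Hr Hd]]]] end.
    exists (PAbs P2), (PAbs P3). split; [apply ac_pabs; auto|split; [apply red_pabs; auto|constructor; auto]].
  - inv HP.
    + match goal with h : par P _ |- _ =>
        destruct (IH P ltac:(simpl; lia) _ _ HD1 h) as [P2 [P3 [Ha [Hr Hd]]]] end.
      match goal with h : par Q _ |- _ =>
        destruct (IH Q ltac:(simpl; lia) _ _ HD2 h) as [Q2 [Q3 [Ha' [Hr' Hd']]]] end.
      exists (PApp P2 Q2), (PApp P3 Q3). split; [apply ac_papp; auto|split; [apply red_papp; auto|constructor; auto]].
    + rename B into Bb. match goal with h : ac P (PAbs Bb) |- _ =>
        destruct (D_abs_left _ _ HD1 _ h) as [B0 [C0 [Hs0 [HB0 [HD0 HC0]]]]] end.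
      match goal with h : par Bb _ |- _ =>
        destruct (transport _ _ _ HB0 h) as [B0' [HP0 HA0]] end.
      destruct (IH B0 ltac:(simpl; lia) _ _ HD0 HP0) as [B0'' [C1 [Ha [Hr Hd]]]].
      match goal with h : par Q _ |- _ =>
        destruct (IH Q ltac:(simpl; lia) _ _ HD2 h) as [Q2 [Q3 [Ha' [Hr' Hd']]]] end.
      exists (psubst1 Q2 B0''), (psubst1 Q3 C1). split; [|split].
      * apply ac_psubst1; eauto.
      * eapply red_trans. apply red_par1. eapply par_beta; [exact HC0 | apply par_refl | apply par_refl].
        apply red_psubst1; auto.
      * apply D_psubst1; auto.
  - inv HP. match goal with h : par P _ |- _ =>
      destruct (IH P ltac:(simpl; lia) _ _ HD h) as [P2 [P3 [Ha [Hr Hd]]]] end.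
    exists (NAbs P2), (NAbs P3). split; [apply ac_nabs; auto|split; [apply red_nabs; auto|constructor; auto]].
  - inv HP.
    + match goal with h : par P _ |- _ =>
        destruct (IH P ltac:(simpl; lia) _ _ HD h) as [P2 [P3 [Ha [Hr Hd]]]] end.
      exists (NApp P2 n0), (NApp P3 n0). split; [apply ac_napp; auto|split; [apply red_napp; auto|constructor; auto]].
    + rename B into Bb. match goal with h : ac P (NAbs Bb) |- _ =>
        destruct (D_nabs_left _ _ HD _ h) as [B0 [C0 [Hs0 [HB0 [HD0 HC0]]]]] end.
      match goal with h : par Bb _ |- _ =>
        destruct (transport _ _ _ HB0 h) as [B0' [HP0 HA0]] end.
      destruct (IH B0 ltac:(simpl; lia) _ _ HD0 HP0) as [B0'' [C1 [Ha [Hr Hd]]]].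
      exists (nsubst1 n0 B0''), (nsubst1 n0 C1). split; [|split].
      * apply ac_nsubst; eauto.
      * eapply red_trans. apply red_par1. eapply par_nbeta; [exact HC0 | apply par_refl].
        apply red_nsubst1; auto.
      * apply D_nsubst; auto.
  - inv HP. exists (Inp m P'), Y. split; [apply ac_refl|split; [apply red_refl|]].
    eapply D_dis_left; eauto. apply EQ_sc, par_scong; auto.
Qed.

Lemma D7 : forall n X, size X < n -> forall Y Y', D X Y -> par Y Y' ->
  exists X', red X X' /\ D X' Y'.
Proof.
  induction n; intros X Hs Y Y' HD HP. lia.
  assert (IH : forall X0, size X0 < size X -> forall Y Y', D X0 Y -> par Y Y' ->
    exists X', red X0 X' /\ D X' Y') by
    (intros X0 HX0 Y0 Y0' H1 H2; apply (IHn X0 ltac:(lia) Y0 Y0' H1 H2)).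
  clear IHn.
  destruct HD.
  - inv HP. exists Nil. split; [apply red_refl|constructor].
  - inv HP. exists (PVar i). split; [apply red_refl|constructor].
  - inv HP. match goal with h : par P' _ |- _ =>
      destruct (IH P ltac:(simpl; lia) _ _ HD h) as [P2 [Hr Hd]] end.
    exists (Inp m P2). split; [apply red_inp; auto|constructor; auto].
  - inv HP. match goal with h : par Q' _ |- _ =>
      destruct (IH Q ltac:(simpl; lia) _ _ HD h) as [P2 [Hr Hd]] end.
    exists (Out m P2). split; [apply red_out; auto|constructor; auto].
  - destruct (ac_par_l _ _ _ H HP) as [W [HW HaW]]. inv HW.
    match goal with h : par P' _ |- _ =>
      destruct (IH P ltac:(simpl; lia) _ _ HD1 h) as [P2 [Hr Hd]] end.
    match goal with h : par Q' _ |- _ =>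
      destruct (IH Q ltac:(simpl; lia) _ _ HD2 h) as [Q2 [Hr' Hd']] end.
    exists (Par P2 Q2). split; [apply red_par; auto|]. apply D_par with P'0 Q'0; auto.
  - inv HP. match goal with h : par P' _ |- _ =>
      destruct (IH P ltac:(simpl; lia) _ _ HD h) as [P2 [Hr Hd]] end.
    exists (PAbs P2). split; [apply red_pabs; auto|constructor; auto].
  - inv HP.
    + match goal with h : par P' _ |- _ =>
        destruct (IH P ltac:(simpl; lia) _ _ HD1 h) as [P2 [Hr Hd]] end.
      match goal with h : par Q' _ |- _ =>
        destruct (IH Q ltac:(simpl; lia) _ _ HD2 h) as [Q2 [Hr' Hd']] end.
      exists (PApp P2 Q2). split; [apply red_papp; auto|constructor; auto].
    + rename B into Cc. match goal with h : ac P' (PAbs Cc) |- _ =>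
        destruct (D_abs_right _ _ HD1 _ h) as [B0 [C0 [Hs0 [HB0 [HD0 HC0]]]]] end.
      match goal with h : par Cc _ |- _ =>
        destruct (transport _ _ _ HC0 h) as [C0' [HP0 HA0]] end.
      destruct (IH B0 ltac:(simpl; lia) _ _ HD0 HP0) as [B1 [Hr Hd]].
      match goal with h : par Q' _ |- _ =>
        destruct (IH Q ltac:(simpl; lia) _ _ HD2 h) as [Q1 [Hr' Hd']] end.
      exists (psubst1 Q1 (Par B1 Nil)). split.
      * eapply red_trans. apply red_par1. eapply par_beta; [exact HB0 | apply par_refl | apply par_refl].
        apply red_psubst1; auto. eapply red_trans; [exact Hr|]. apply red_ac1, ac_sym, ac_nil.
      * apply D_psubst1; auto. apply D_par with C0' Nil; [exact Hd | constructor | eapply ac_trans; [exact HA0 | apply ac_sym, ac_nil]].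
  - inv HP. match goal with h : par P' _ |- _ =>
      destruct (IH P ltac:(simpl; lia) _ _ HD h) as [P2 [Hr Hd]] end.
    exists (NAbs P2). split; [apply red_nabs; auto|constructor; auto].
  - inv HP.
    + match goal with h : par P' _ |- _ =>
        destruct (IH P ltac:(simpl; lia) _ _ HD h) as [P2 [Hr Hd]] end.
      exists (NApp P2 n0). split; [apply red_napp; auto|constructor; auto].
    + rename B into Cc. match goal with h : ac P' (NAbs Cc) |- _ =>
        destruct (D_nabs_right _ _ HD _ h) as [B0 [C0 [Hs0 [HB0 [HD0 HC0]]]]] end.
      match goal with h : par Cc _ |- _ =>
        destruct (transport _ _ _ HC0 h) as [C0' [HP0 HA0]] end.
      destruct (IH B0 ltac:(simpl; lia) _ _ HD0 HP0) as [B1 [Hr Hd]].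
      exists (nsubst1 n0 (Par B1 Nil)). split.
      * eapply red_trans. apply red_par1. eapply par_nbeta; [exact HB0 | apply par_refl].
        apply red_nsubst1; auto. eapply red_trans; [exact Hr|]. apply red_ac1, ac_sym, ac_nil.
      * apply D_nsubst; auto. apply D_par with C0' Nil; [exact Hd | constructor | eapply ac_trans; [exact HA0 | apply ac_sym, ac_nil]].
  - destruct (ac_par_l _ _ _ H0 HP) as [W [HW HaW]].
    destruct (par_prod_inp _ _ _ HW) as [Ps' [-> HF]].
    exists (Inp m X0). split; [apply red_refl|].
    apply D_dis with Ps'.
    + destruct Ps, Ps'; inversion HF; congruence.
    + apply ac_sym; auto.
    + intros p' rest' Hp.
      apply Forall2_flip in HF.
      destruct (Forall2_perm _ _ _ _ Hp HF) as [k [Hk Fk]].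
      inversion Fk; subst.
      eapply EQ_trans; [apply H1; exact Hk|].
      apply EQ_sc, par_scong. constructor; auto. apply par_ren. apply par_prod_map.
      apply Forall2_flip in H6. exact H6.
Qed.


Inductive obsk := KInp (m : name) (P : term) | KOut (m : name) (A : term) | KVar (i : nat)
  | KApp (i : nat) (A : term) | KNApp (i : nat) (d : name) | KNone.

Definition kind (G : term) : obsk :=
  match G with
  | Inp m P => KInp m P
  | Out m A => KOut m A
  | PVar i => KVar i
  | PApp (PVar i) A => KApp i A
  | NApp (PVar i) d => KNApp i d
  | _ => KNone
  end.

Definition shape (G : term) : Prop := kind G <> KNone.

Definition relobsk (k k' : obsk) (R R' : term) : Prop :=
  match k, k' with
  | KInp m P, KInp m' P' => m = m' /\ EQ (Par P (liftP R)) (Par P' (liftP R'))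
  | KOut m A, KOut m' A' => m = m' /\ EQ A A' /\ EQ R R'
  | KVar i, KVar j => i = j /\ EQ R R'
  | KApp i A, KApp j A' => i = j /\ EQ A A' /\ EQ R R'
  | KNApp i d, KNApp j d' => i = j /\ d = d' /\ EQ R R'
  | _, _ => False
  end.

Definition relobs (G G' R R' : term) : Prop := relobsk (kind G) (kind G') R R'.

Lemma shape_prime G : shape G -> isprime G.
Proof. unfold shape; destruct G; simpl; auto. Qed.

Lemma relobs_sym G G' R R' : relobs G G' R R' -> relobs G' G R' R.
Proof.
  unfold relobs; destruct (kind G), (kind G'); simpl; try tauto;
  intuition (subst; auto using EQ_sym).
Qed.

Lemma relobs_trans G G' G'' R R' R'' : relobs G G' R R' -> relobs G' G'' R' R'' -> relobs G G'' R R''.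
Proof.
  unfold relobs; destruct (kind G), (kind G'), (kind G''); simpl; try tauto;
  intuition (subst; eauto using EQ_trans).
Qed.

Lemma relobs_shape_l G G' R R' : relobs G G' R R' -> shape G.
Proof. unfold relobs, shape; destruct (kind G), (kind G'); simpl; try tauto; congruence. Qed.

Lemma EQ_lift_ac P Q : ac P Q -> EQ (liftP P) (liftP Q).
Proof. intros; apply EQ_lift, EQ_ac; auto. Qed.

Lemma relobs_addpar G G' R1 R1' c c' R R' :
  relobs G G' R1 R1' -> ac R (Par R1 c) -> ac R' (Par R1' c') -> EQ c c' -> relobs G G' R R'.
Proof.
  intros H HR HR' Hc. unfold relobs in *.
  destruct (kind G), (kind G'); simpl in *; try tauto;
  try (intuition (subst; auto);
       eapply EQ_trans; [apply EQ_ac; exact HR|];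
       eapply EQ_trans; [|apply EQ_ac, ac_sym; exact HR'];
       apply EQ_par; auto; fail).
  destruct H as [Hm HE]. split; auto.
  eapply EQ_trans; [apply EQ_par; [apply EQ_refl| apply EQ_lift_ac; exact HR]|]. simpl.
  eapply EQ_trans; [apply EQ_ac, ac_assoc|].
  eapply EQ_trans; [|apply EQ_par; [apply EQ_refl| apply EQ_lift_ac, ac_sym; exact HR']]. simpl.
  eapply EQ_trans; [|apply EQ_ac, ac_sym, ac_assoc].
  apply EQ_par; auto. apply EQ_lift; auto.
Qed.

Lemma primes_of_prime p : isprime p -> primes p = [p].
Proof. destruct p; simpl; tauto. Qed.

Lemma PR_perm l l' : Permutation l l' -> Forall isprime l' -> PR l l'.
Proof. intros. exists l'; split; auto. apply F2_refl; auto. Qed.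

Lemma ac_prime_par p G R : isprime p -> isprime G -> ac p (Par G R) -> acprime p G /\ primes R = [].
Proof.
  intros Hp HG H. apply ac_primes in H. simpl in H.
  rewrite (primes_of_prime p Hp), (primes_of_prime G HG) in H. simpl in H.
  apply PR_single_inv in H. destruct H as [y [Hy Ha]]. inversion Hy; subst. auto.
Qed.

Lemma ac_par_prime_split a b G R : isprime G -> ac (Par a b) (Par G R) ->
  (exists R1, ac a (Par G R1) /\ ac R (Par R1 b)) \/ (exists R1, ac b (Par G R1) /\ ac R (Par a R1)).
Proof.
  intros HG H. apply ac_primes in H. simpl in H. rewrite (primes_of_prime G HG) in H. simpl in H.
  apply PR_sym in H. apply PR_cons_inv in H. destruct H as [y [k [Hp [Hacp HPR]]]].
  assert (Hin : In y (primes a ++ primes b)) by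
    (apply Permutation_in with (y :: k); [apply Permutation_sym; exact Hp| left; auto]).
  pose proof (primes_isprime a) as Fa. pose proof (primes_isprime b) as Fb.
  apply in_app_or in Hin. destruct Hin as [Hin|Hin].
  - apply in_split in Hin. destruct Hin as [l1 [l2 Ea]]. rewrite Ea in *.
    assert (Fl : Forall isprime (l1 ++ l2)).
    { apply Forall_app in Fa. destruct Fa as [F1 F2]. inversion F2. apply Forall_app; auto. }
    left. exists (prod (l1 ++ l2)). split.
    + apply PR_ac. rewrite Ea. simpl. rewrite (primes_of_prime G HG), primes_prod by auto.
      exists (y :: l1 ++ l2). split. apply Permutation_sym, Permutation_middle.
      constructor. apply acprime_sym; auto. apply F2_refl; auto.
    + apply PR_ac. simpl. rewrite primes_prod by auto.
      eapply PR_trans; [exact HPR|]. apply PR_perm.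
      rewrite <- app_assoc. apply Permutation_cons_app_inv with y.
      apply Permutation_sym. rewrite <- app_assoc in Hp. exact Hp.
      apply Forall_app; auto.
  - apply in_split in Hin. destruct Hin as [l1 [l2 Ea]]. rewrite Ea in *.
    assert (Fl : Forall isprime (l1 ++ l2)).
    { apply Forall_app in Fb. destruct Fb as [F1 F2]. inversion F2. apply Forall_app; auto. }
    right. exists (prod (l1 ++ l2)). split.
    + apply PR_ac. rewrite Ea. simpl. rewrite (primes_of_prime G HG), primes_prod by auto.
      exists (y :: l1 ++ l2). split. apply Permutation_sym, Permutation_middle.
      constructor. apply acprime_sym; auto. apply F2_refl; auto.
    + apply PR_ac. simpl. rewrite primes_prod by auto.
      eapply PR_trans; [exact HPR|]. apply PR_perm.
      rewrite app_assoc. apply Permutation_cons_app_inv with y.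
      apply Permutation_sym. rewrite <- app_assoc. exact Hp.
      apply Forall_app; auto.
Qed.

Lemma ac_prime_par' p G R : ac p (Par G R) -> isprime p -> isprime G -> acprime p G /\ primes R = [].
Proof. intros; apply ac_prime_par; auto. Qed.

Lemma ac_swap a g r : ac (Par a (Par g r)) (Par g (Par r a)).
Proof.
  eapply ac_trans; [apply ac_comm|]. eapply ac_trans; [apply ac_sym, ac_assoc|]. apply ac_refl.
Qed.

Lemma nil_lift_EQ R : primes R = [] -> EQ (liftP R) Nil.
Proof.
  intros H. apply EQ_ac. apply ac_nil_primes in H. apply ac_ren with (f := S) (g := fun i => i) in H.
  exact H.
Qed.

Lemma EQ_par_nil P R : primes R = [] -> EQ (Par P (liftP R)) P.
Proof.
  intros H. eapply EQ_trans; [apply EQ_par; [apply EQ_refl| apply nil_lift_EQ; auto]|].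
  apply EQ_ac, ac_nil.
Qed.

Lemma EQ_nil_of R : primes R = [] -> EQ R Nil.
Proof. intros; apply EQ_ac, ac_nil_primes; auto. Qed.

Ltac shape_fix :=
  match goal with
  | Hsh : shape ?G |- _ => unfold shape in Hsh; simpl in Hsh; try congruence
  end.

Lemma ObsF Z W : D Z W -> forall G R, ac Z (Par G R) -> shape G ->
  exists G' R', ac W (Par G' R') /\ relobs G G' R R'.
Proof.
  pose proof I as HI.
  induction 1; intros G R HZ Hsh; pose proof (shape_prime _ Hsh) as HGp.
  - exfalso. apply ac_primes in HZ. simpl in HZ. rewrite (primes_of_prime G HGp) in HZ.
    apply PR_nil_l in HZ. discriminate.
  - destruct (ac_prime_par' _ _ _ HZ I HGp) as [Ha Hn].
    destruct G; simpl in Ha; try contradiction. subst.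
    do 2 eexists; split; [apply ac_sym, ac_nil|]. unfold relobs; simpl. split; auto.
    apply EQ_nil_of; auto.
  - destruct (ac_prime_par' _ _ _ HZ I HGp) as [Ha Hn].
    destruct G; simpl in Ha; try contradiction. destruct Ha as [-> Ha].
    do 2 eexists; split; [apply ac_sym, ac_nil|]. unfold relobs; simpl. split; auto.
    eapply EQ_trans; [apply EQ_par_nil; auto|]. eapply EQ_trans; [apply EQ_ac, ac_sym, Ha|].
    eapply EQ_trans; [apply EQ_D; exact H|]. apply EQ_sym, EQ_par_nil. reflexivity.
  - destruct (ac_prime_par' _ _ _ HZ I HGp) as [Ha Hn].
    destruct G; simpl in Ha; try contradiction. destruct Ha as [-> Ha].
    do 2 eexists; split; [apply ac_sym, ac_nil|]. unfold relobs; simpl. split; auto.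
    split. eapply EQ_trans; [apply EQ_ac, ac_sym, Ha|]. apply EQ_D; auto.
    apply EQ_nil_of; auto.
  - destruct (ac_par_prime_split _ _ _ _ HGp HZ) as [[R1 [Ha HR]]|[R1 [Ha HR]]].
    + destruct (IHD1 _ _ Ha Hsh) as [G' [R1' [Hw Hr]]].
      exists G', (Par R1' Q'). split.
      eapply ac_trans; [exact H1|]. eapply ac_trans; [apply ac_par; [exact Hw|apply ac_refl]|].
      apply ac_sym, ac_assoc.
      eapply relobs_addpar; [exact Hr | exact HR | apply ac_refl | apply EQ_D; auto].
    + destruct (IHD2 _ _ Ha Hsh) as [G' [R1' [Hw Hr]]].
      exists G', (Par R1' P'). split.
      eapply ac_trans; [exact H1|]. eapply ac_trans; [apply ac_par; [apply ac_refl|exact Hw]|].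
      apply ac_swap.
      eapply relobs_addpar; [exact Hr | eapply ac_trans; [exact HR| apply ac_comm] | apply ac_refl | apply EQ_D; auto].
  - destruct (ac_prime_par' _ _ _ HZ I HGp) as [Ha Hn].
    destruct G; simpl in Ha; try contradiction; shape_fix.
  - destruct (ac_prime_par' _ _ _ HZ I HGp) as [Ha Hn].
    destruct G; simpl in Ha; try contradiction. destruct G1; shape_fix.
    destruct Ha as [Ha1 Ha2]. apply (D_pvar_left _ _ _ H) in Ha1.
    do 2 eexists; split;
    [eapply ac_trans; [apply ac_papp; [exact Ha1|apply ac_refl]| apply ac_sym, ac_nil]|].
    unfold relobs; simpl. split; auto. split.
    eapply EQ_trans; [apply EQ_ac, ac_sym, Ha2|]. apply EQ_D; auto.
    apply EQ_nil_of; auto.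
  - destruct (ac_prime_par' _ _ _ HZ I HGp) as [Ha Hn].
    destruct G; simpl in Ha; try contradiction; shape_fix.
  - destruct (ac_prime_par' _ _ _ HZ I HGp) as [Ha Hn].
    destruct G; simpl in Ha; try contradiction. destruct G; shape_fix.
    destruct Ha as [Ha1 ->]. apply (D_pvar_left _ _ _ H) in Ha1.
    do 2 eexists; split;
    [eapply ac_trans; [apply ac_napp; exact Ha1| apply ac_sym, ac_nil]|].
    unfold relobs; simpl. split; auto. split; auto. apply EQ_nil_of; auto.
  - destruct (ac_prime_par' _ _ _ HZ I HGp) as [Ha Hn].
    destruct G; simpl in Ha; try contradiction. destruct Ha as [-> Ha].
    destruct Ps as [|p rest]. congruence.
    do 2 eexists; split; [eapply ac_trans; [exact H0| apply prod_cons]|].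
    unfold relobs; simpl. split; auto.
    eapply EQ_trans; [apply EQ_par_nil; auto|]. eapply EQ_trans; [apply EQ_ac, ac_sym, Ha|].
    apply H1. apply Permutation_refl.
Qed.

Lemma ObsB W Z : D W Z -> forall G R, ac Z (Par G R) -> shape G ->
  exists G' R', ac W (Par G' R') /\ relobs G' G R' R.
Proof.
  induction 1; intros G R HZ Hsh; pose proof (shape_prime _ Hsh) as HGp.
  - exfalso. apply ac_primes in HZ. simpl in HZ. rewrite (primes_of_prime G HGp) in HZ.
    apply PR_nil_l in HZ. discriminate.
  - destruct (ac_prime_par' _ _ _ HZ I HGp) as [Ha Hn].
    destruct G; simpl in Ha; try contradiction. subst.
    do 2 eexists; split; [apply ac_sym, ac_nil|]. unfold relobs; simpl. split; auto.
    apply EQ_sym, EQ_nil_of; auto.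
  - destruct (ac_prime_par' _ _ _ HZ I HGp) as [Ha Hn].
    destruct G; simpl in Ha; try contradiction. destruct Ha as [-> Ha].
    do 2 eexists; split; [apply ac_sym, ac_nil|]. unfold relobs; simpl. split; auto.
    eapply EQ_trans; [apply EQ_par_nil; reflexivity|].
    eapply EQ_trans; [apply EQ_D; exact H|]. eapply EQ_trans; [apply EQ_ac, Ha|].
    apply EQ_sym, EQ_par_nil; auto.
  - destruct (ac_prime_par' _ _ _ HZ I HGp) as [Ha Hn].
    destruct G; simpl in Ha; try contradiction. destruct Ha as [-> Ha].
    do 2 eexists; split; [apply ac_sym, ac_nil|]. unfold relobs; simpl. split; auto.
    split. eapply EQ_trans; [apply EQ_D; exact H|]. apply EQ_ac; auto.
    apply EQ_sym, EQ_nil_of; auto.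
  - assert (HZ' : ac (Par P' Q') (Par G R)) by (eapply ac_trans; [apply ac_sym, H1| exact HZ]).
    destruct (ac_par_prime_split _ _ _ _ HGp HZ') as [[R1 [Ha HR]]|[R1 [Ha HR]]].
    + destruct (IHD1 _ _ Ha Hsh) as [G' [R1' [Hw Hr]]].
      exists G', (Par R1' Q). split.
      eapply ac_trans; [apply ac_par; [exact Hw|apply ac_refl]|]. apply ac_sym, ac_assoc.
      eapply relobs_addpar; [exact Hr | apply ac_refl | exact HR | apply EQ_D; auto].
    + destruct (IHD2 _ _ Ha Hsh) as [G' [R1' [Hw Hr]]].
      exists G', (Par R1' P). split.
      eapply ac_trans; [apply ac_par; [apply ac_refl|exact Hw]|]. apply ac_swap.
      eapply relobs_addpar; [exact Hr | apply ac_refl | eapply ac_trans; [exact HR| apply ac_comm] | apply EQ_D; auto].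
  - destruct (ac_prime_par' _ _ _ HZ I HGp) as [Ha Hn].
    destruct G; simpl in Ha; try contradiction; shape_fix.
  - destruct (ac_prime_par' _ _ _ HZ I HGp) as [Ha Hn].
    destruct G; simpl in Ha; try contradiction. destruct G1; shape_fix.
    destruct Ha as [Ha1 Ha2]. apply (D_pvar_right _ _ _ H) in Ha1.
    do 2 eexists; split;
    [eapply ac_trans; [apply ac_papp; [exact Ha1|apply ac_refl]| apply ac_sym, ac_nil]|].
    unfold relobs; simpl. split; auto. split.
    eapply EQ_trans; [apply EQ_D; exact H0|]. apply EQ_ac; auto.
    apply EQ_sym, EQ_nil_of; auto.
  - destruct (ac_prime_par' _ _ _ HZ I HGp) as [Ha Hn].
    destruct G; simpl in Ha; try contradiction; shape_fix.
  - destruct (ac_prime_par' _ _ _ HZ I HGp) as [Ha Hn].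
    destruct G; simpl in Ha; try contradiction. destruct G; shape_fix.
    destruct Ha as [Ha1 ->]. apply (D_pvar_right _ _ _ H) in Ha1.
    do 2 eexists; split;
    [eapply ac_trans; [apply ac_napp; exact Ha1| apply ac_sym, ac_nil]|].
    unfold relobs; simpl. split; auto. split; auto. apply EQ_sym, EQ_nil_of; auto.
  - assert (HZ' : ac (prod (map (Inp m) Ps)) (Par G R)) by (eapply ac_trans; [apply ac_sym, H0| exact HZ]).
    apply ac_primes in HZ'. rewrite primes_prod_inps in HZ'. simpl in HZ'.
    rewrite (primes_of_prime G HGp) in HZ'. simpl in HZ'.
    apply PR_sym in HZ'. apply PR_cons_inv in HZ'. destruct HZ' as [y [k [Hp [Hacp HPR]]]].
    apply Permutation_sym in Hp. apply Permutation_map_inv in Hp. destruct Hp as [l3 [Heq Hp]].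
    destruct l3 as [|p rest]; simpl in Heq; inversion Heq; subst.
    destruct G; simpl in Hacp; try contradiction. destruct Hacp as [-> Hacp].
    do 2 eexists; split; [apply ac_sym, ac_nil|]. unfold relobs; simpl. split; auto.
    eapply EQ_trans; [apply EQ_par_nil; reflexivity|].
    eapply EQ_trans; [apply H1; exact Hp|].
    apply EQ_par. apply EQ_ac, ac_sym; auto.
    apply EQ_lift_ac. apply ac_sym, PR_ac. rewrite primes_prod_inps. auto.
Qed.


Lemma D6star X Z : star par X Z -> forall X' Y, ac X X' -> D X' Y ->
  exists Z' W, ac Z Z' /\ red Y W /\ D Z' W.
Proof.
  induction 1; intros X' Y0 HA HD.
  - exists X', Y0. split; auto. split; auto. apply red_refl.
  - destruct (ac_par_l _ _ _ HA H) as [X1 [HP HA1]].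
    destruct (D6 (S (size X')) X' ltac:(lia) _ _ HD HP) as [X2 [Y1 [Ha2 [Hr Hd]]]].
    destruct (IHstar X2 Y1 (ac_trans _ _ _ HA1 Ha2) Hd) as [Z' [W [? [? ?]]]].
    exists Z', W. split; auto. split; auto. eapply red_trans; eauto.
Qed.

Lemma D7star Y Z : star par Y Z -> forall X, D X Y -> exists V, red X V /\ D V Z.
Proof.
  induction 1; intros X0 HD.
  - exists X0. split; auto. apply red_refl.
  - destruct (D7 (S (size X0)) X0 ltac:(lia) _ _ HD H) as [X1 [Hr Hd]].
    destruct (IHstar _ Hd) as [V [? ?]]. exists V. split; auto. eapply red_trans; eauto.
Qed.

Lemma relobs_refl G R R' : shape G -> EQ R R' -> relobs G G R R'.
Proof.
  unfold shape, relobs. destruct (kind G); simpl; intros; try congruence; intuition auto using EQ_refl.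
  apply EQ_par. apply EQ_refl. apply EQ_lift; auto.
Qed.

Lemma par_shape G G2 : par G G2 -> shape G -> shape G2 /\ forall R R2, EQ R R2 -> relobs G G2 R R2.
Proof.
  intros HP Hsh. unfold shape, relobs in *.
  destruct HP; simpl in *; try congruence.
  - split; [congruence|]. intros; auto.
  - split; [congruence|]. intros. split; auto. apply EQ_par. apply EQ_sc, par_scong; auto. apply EQ_lift; auto.
  - split; [congruence|]. intros. split; auto. split; auto. apply EQ_sc, par_scong; auto.
  - destruct P; simpl in *; try congruence. inv HP1. split; [congruence|]. intros.
    split; auto. split; auto. apply EQ_sc, par_scong; auto.
  - destruct P; simpl in *; try congruence. inv HP. split; [congruence|]. intros. auto.
  - destruct X; simpl in *; try congruence.
    apply ac_prime_inv in H; simpl in H; [contradiction|exact I|exact I].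
  - destruct X; simpl in *; try congruence.
    apply ac_prime_inv in H; simpl in H; [contradiction|exact I|exact I].
Qed.

Lemma star_shape S Z : star par S Z -> forall G R, S = Par G R -> shape G ->
  exists G2 R2, Z = Par G2 R2 /\ shape G2 /\ relobs G G2 R R2.
Proof.
  induction 1; intros G R -> Hsh.
  - exists G, R. split; auto. split; auto. apply relobs_refl; auto. apply EQ_refl.
  - inv H. destruct (par_shape _ _ H3 Hsh) as [Hs2 Hr].
    destruct (IHstar _ _ eq_refl Hs2) as [G2 [R2 [-> [? ?]]]].
    exists G2, R2. split; auto. split; auto. eapply relobs_trans; [apply Hr|]; eauto.
    apply EQ_sc, par_scong; auto.
Qed.

Lemma star_pabs S Z : star par S Z -> forall A, S = PAbs A -> exists A2, Z = PAbs A2 /\ scong A A2.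
Proof.
  induction 1; intros A ->.
  - exists A; split; auto. apply sc_refl.
  - inv H. destruct (IHstar _ eq_refl) as [A2 [-> ?]]. exists A2; split; auto.
    eapply sc_trans; [apply par_scong|]; eauto.
Qed.

Lemma star_nabs S Z : star par S Z -> forall A, S = NAbs A -> exists A2, Z = NAbs A2 /\ scong A A2.
Proof.
  induction 1; intros A ->.
  - exists A; split; auto. apply sc_refl.
  - inv H. destruct (IHstar _ eq_refl) as [A2 [-> ?]]. exists A2; split; auto.
    eapply sc_trans; [apply par_scong|]; eauto.
Qed.

Lemma TF X Y G R : D X Y -> scong X (Par G R) -> shape G ->
  exists G' R', scong Y (Par G' R') /\ relobs G G' R R'.
Proof.
  intros HD HS Hsh. destruct (CR _ _ HS) as [Z1 [Z2 [H1 [H2 H3]]]].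
  destruct (star_shape _ _ H2 _ _ eq_refl Hsh) as [G2 [R2 [-> [Hs2 Hr2]]]].
  destruct (D6star _ _ H1 X Y (ac_refl _) HD) as [Z' [W [Ha [Hr Hd]]]].
  destruct (ObsF _ _ Hd G2 R2 (ac_trans _ _ _ (ac_sym _ _ Ha) H3) Hs2) as [G' [R' [Hw Hrel]]].
  exists G', R'. split. eapply sc_trans; [apply red_scong; eauto| apply ac_scong; auto].
  eapply relobs_trans; eauto.
Qed.

Lemma TB X Y G R : D X Y -> scong Y (Par G R) -> shape G ->
  exists G' R', scong X (Par G' R') /\ relobs G G' R R'.
Proof.
  intros HD HS Hsh. destruct (CR _ _ HS) as [Z1 [Z2 [H1 [H2 H3]]]].
  destruct (star_shape _ _ H2 _ _ eq_refl Hsh) as [G2 [R2 [-> [Hs2 Hr2]]]].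
  destruct (D7star _ _ H1 X HD) as [V [Hr Hd]].
  destruct (ObsB _ _ Hd G2 R2 H3 Hs2) as [G' [R' [Hw Hrel]]].
  exists G', R'. split. eapply sc_trans; [apply red_scong; eauto| apply ac_scong; auto].
  eapply relobs_trans; eauto. apply relobs_sym; auto.
Qed.

Lemma KF X Y A : D X Y -> scong X (PAbs A) -> exists B, scong Y (PAbs B) /\ EQ A B.
Proof.
  intros HD HS. destruct (CR _ _ HS) as [Z1 [Z2 [H1 [H2 H3]]]].
  destruct (star_pabs _ _ H2 _ eq_refl) as [A2 [-> HA2]].
  destruct (D6star _ _ H1 X Y (ac_refl _) HD) as [Z' [W [Ha [Hr Hd]]]].
  destruct (D_abs_left _ _ Hd A2 (ac_trans _ _ _ (ac_sym _ _ Ha) H3)) as [B0 [C0 [_ [HB0 [HD0 HW]]]]].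
  exists C0. split. eapply sc_trans; [apply red_scong; eauto| apply ac_scong; auto].
  eapply EQ_trans; [apply EQ_sc; exact HA2|]. eapply EQ_trans; [apply EQ_ac, ac_sym; exact HB0|].
  apply EQ_D; auto.
Qed.

Lemma KB X Y A : D X Y -> scong Y (PAbs A) -> exists B, scong X (PAbs B) /\ EQ A B.
Proof.
  intros HD HS. destruct (CR _ _ HS) as [Z1 [Z2 [H1 [H2 H3]]]].
  destruct (star_pabs _ _ H2 _ eq_refl) as [A2 [-> HA2]].
  destruct (D7star _ _ H1 X HD) as [V [Hr Hd]].
  destruct (D_abs_right _ _ Hd A2 H3) as [B0 [C0 [_ [HV [HD0 HC0]]]]].
  exists B0. split. eapply sc_trans; [apply red_scong; eauto| apply ac_scong; auto].
  apply EQ_sym. eapply EQ_trans; [apply EQ_D; exact HD0|]. eapply EQ_trans; [apply EQ_ac; exact HC0|].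
  apply EQ_sc, sc_sym; auto.
Qed.

Lemma NKF X Y A : D X Y -> scong X (NAbs A) -> exists B, scong Y (NAbs B) /\ EQ A B.
Proof.
  intros HD HS. destruct (CR _ _ HS) as [Z1 [Z2 [H1 [H2 H3]]]].
  destruct (star_nabs _ _ H2 _ eq_refl) as [A2 [-> HA2]].
  destruct (D6star _ _ H1 X Y (ac_refl _) HD) as [Z' [W [Ha [Hr Hd]]]].
  destruct (D_nabs_left _ _ Hd A2 (ac_trans _ _ _ (ac_sym _ _ Ha) H3)) as [B0 [C0 [_ [HB0 [HD0 HW]]]]].
  exists C0. split. eapply sc_trans; [apply red_scong; eauto| apply ac_scong; auto].
  eapply EQ_trans; [apply EQ_sc; exact HA2|]. eapply EQ_trans; [apply EQ_ac, ac_sym; exact HB0|].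
  apply EQ_D; auto.
Qed.

Lemma NKB X Y A : D X Y -> scong Y (NAbs A) -> exists B, scong X (NAbs B) /\ EQ A B.
Proof.
  intros HD HS. destruct (CR _ _ HS) as [Z1 [Z2 [H1 [H2 H3]]]].
  destruct (star_nabs _ _ H2 _ eq_refl) as [A2 [-> HA2]].
  destruct (D7star _ _ H1 X HD) as [V [Hr Hd]].
  destruct (D_nabs_right _ _ Hd A2 H3) as [B0 [C0 [_ [HV [HD0 HC0]]]]].
  exists B0. split. eapply sc_trans; [apply red_scong; eauto| apply ac_scong; auto].
  apply EQ_sym. eapply EQ_trans; [apply EQ_D; exact HD0|]. eapply EQ_trans; [apply EQ_ac; exact HC0|].
  apply EQ_sc, sc_sym; auto.
Qed.


Definition transA (P : term) (l : label) (P' : term) : Prop :=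
  match l with
  | LInp m => exists P1 R, scong P (Par (Inp m P1) R) /\ scong P' (Par P1 (liftP R))
  | LOut m A => exists R, scong P (Par (Out m A) R) /\ scong P' R
  | LTau => True
  end.

Lemma trans_A P l P' : trans P l P' -> transA P l P'.
Proof.
  induction 1; simpl in *; auto.
  - exists P, Nil. split. apply sc_sym, sc_par_nil. apply sc_sym, sc_par_nil.
  - exists Nil. split. apply sc_sym, sc_par_nil. apply sc_refl.
  - destruct IHtrans as [R [H1 H2]]. exists (Par R Q). split.
    eapply sc_trans; [apply sc_par; [exact H1|apply sc_refl]|]. apply sc_sym, sc_par_assoc.
    apply sc_par; first [assumption | apply sc_refl].
  - destruct IHtrans as [P1 [R [H1 H2]]]. exists P1, (Par R Q). split.
    eapply sc_trans; [apply sc_par; [exact H1|apply sc_refl]|]. apply sc_sym, sc_par_assoc.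
    eapply sc_trans; [apply sc_par; [exact H2|apply sc_refl]|]. unfold liftP; simpl.
    apply sc_sym, sc_par_assoc.
  - destruct IHtrans as [R [H1 H2]]. exists (Par P R). split.
    eapply sc_trans; [apply sc_par; [apply sc_refl|exact H1]|].
    eapply sc_trans; [apply sc_par_comm|]. eapply sc_trans; [apply sc_sym, sc_par_assoc|].
    apply sc_par; [apply sc_refl| apply sc_par_comm].
    apply sc_par; first [assumption | apply sc_refl].
  - destruct IHtrans as [P1 [R [H1 H2]]]. exists P1, (Par P R). split.
    eapply sc_trans; [apply sc_par; [apply sc_refl|exact H1]|].
    eapply sc_trans; [apply sc_par_comm|]. eapply sc_trans; [apply sc_sym, sc_par_assoc|].
    apply sc_par; [apply sc_refl| apply sc_par_comm].
    eapply sc_trans; [apply sc_par; [apply sc_refl|exact H2]|]. unfold liftP; simpl.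
    eapply sc_trans; [apply sc_par_comm|]. eapply sc_trans; [apply sc_sym, sc_par_assoc|].
    apply sc_par; [apply sc_refl| apply sc_par_comm].
  - destruct l; simpl in *; auto.
    + destruct IHtrans as [R [Ha Hb]]. exists R. split.
      eapply sc_trans; eauto. eapply sc_trans; [apply sc_sym|]; eauto.
    + destruct IHtrans as [P1 [R [Ha Hb]]]. exists P1, R. split.
      eapply sc_trans; eauto. eapply sc_trans; [apply sc_sym|]; eauto.
Qed.

Lemma transA_in P m P1 R P' : scong P (Par (Inp m P1) R) -> scong P' (Par P1 (liftP R)) ->
  trans P (LInp m) P'.
Proof.
  intros H1 H2. eapply tr_scong; [exact H1| | apply sc_sym, H2].
  apply tr_parl_inp, tr_inp.
Qed.

Lemma transA_out P m A R P' : scong P (Par (Out m A) R) -> scong P' R -> trans P (LOut m A) P'.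
Proof.
  intros H1 H2. eapply tr_scong; [exact H1| | ].
  apply tr_parl_out, tr_out. eapply sc_trans; [apply sc_par_comm|].
  eapply sc_trans; [apply sc_par_nil|]. apply sc_sym, H2.
Qed.

Definition Obs P Q :=
  (forall A, scong P (PAbs A) -> exists B, scong Q (PAbs B) /\ EQ A B) /\
  (forall A, scong P (NAbs A) -> exists B, scong Q (NAbs B) /\ EQ A B) /\
  (forall G R, scong P (Par G R) -> shape G -> exists G' R', scong Q (Par G' R') /\ relobs G G' R R').

Lemma EQ_Obs P Q : EQ P Q -> Obs P Q /\ Obs Q P.
Proof.
  induction 1.
  - split; (split; [|split]); intros.
    + exists A; split; [eapply sc_trans; [apply sc_sym, H|exact H0]|apply EQ_refl].
    + exists A; split; [eapply sc_trans; [apply sc_sym, H|exact H0]|apply EQ_refl].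
    + exists G, R; split; [eapply sc_trans; [apply sc_sym, H|exact H0]|apply relobs_refl; [assumption|apply EQ_refl]].
    + exists A; split; [eapply sc_trans; [apply H|exact H0]|apply EQ_refl].
    + exists A; split; [eapply sc_trans; [apply H|exact H0]|apply EQ_refl].
    + exists G, R; split; [eapply sc_trans; [apply H|exact H0]|apply relobs_refl; [assumption|apply EQ_refl]].
  - split; (split; [|split]); intros.
    + eapply KF; eauto.
    + eapply NKF; eauto.
    + eapply TF; eauto.
    + eapply KB; eauto.
    + eapply NKB; eauto.
    + eapply TB; eauto.
  - tauto.
  - destruct IHEQ1 as [[A1 [B1 C1]] [A1' [B1' C1']]].
    destruct IHEQ2 as [[A2 [B2 C2]] [A2' [B2' C2']]].
    split; (split; [|split]); intros.
    + destruct (A1 _ H1) as [x [? ?]]. destruct (A2 _ H2) as [y [? ?]]. exists y; split; eauto using EQ_trans.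
    + destruct (B1 _ H1) as [x [? ?]]. destruct (B2 _ H2) as [y [? ?]]. exists y; split; eauto using EQ_trans.
    + destruct (C1 _ _ H1 H2) as [g [r [? ?]]].
      destruct (C2 _ _ H3 (relobs_shape_l _ _ _ _ (relobs_sym _ _ _ _ H4))) as [g' [r' [? ?]]].
      exists g', r'; split; eauto using relobs_trans.
    + destruct (A2' _ H1) as [x [? ?]]. destruct (A1' _ H2) as [y [? ?]]. exists y; split; eauto using EQ_trans.
    + destruct (B2' _ H1) as [x [? ?]]. destruct (B1' _ H2) as [y [? ?]]. exists y; split; eauto using EQ_trans.
    + destruct (C2' _ _ H1 H2) as [g [r [? ?]]].
      destruct (C1' _ _ H3 (relobs_shape_l _ _ _ _ (relobs_sym _ _ _ _ H4))) as [g' [r' [? ?]]].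
      exists g', r'; split; eauto using relobs_trans.
Qed.


Lemma kind_out G m A : kind G = KOut m A -> G = Out m A.
Proof. destruct G as [| | | | | | G1 G2 | | G1 n]; simpl; try congruence; destruct G1; simpl; congruence. Qed.
Lemma kind_inp G m A : kind G = KInp m A -> G = Inp m A.
Proof. destruct G as [| | | | | | G1 G2 | | G1 n]; simpl; try congruence; destruct G1; simpl; congruence. Qed.
Lemma kind_var G i : kind G = KVar i -> G = PVar i.
Proof. destruct G as [| | | | | | G1 G2 | | G1 n]; simpl; try congruence; destruct G1; simpl; congruence. Qed.
Lemma kind_app G i A : kind G = KApp i A -> G = PApp (PVar i) A.
Proof. destruct G as [| | | | | | G1 G2 | | G1 n]; simpl; try congruence; destruct G1; simpl; congruence. Qed.
Lemma kind_napp G i d : kind G = KNApp i d -> G = NApp (PVar i) d.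
Proof. destruct G as [| | | | | | G1 G2 | | G1 n]; simpl; try congruence; destruct G1; simpl; congruence. Qed.

Lemma EQ_bisim : is_bisimulation EQ.
Proof.
  unfold is_bisimulation; intros P Q H.
  destruct (EQ_Obs _ _ H) as [[OA [ON OG]] [OA' [ON' OG']]].
  split.
  { intros [H1 H2]; split; intros B HB.
    - destruct (OA' _ HB) as [A [HA _]]. exact (H1 A HA).
    - destruct (ON' _ HB) as [A [HA _]]. exact (H2 A HA). }
  split. exact OA. split. exact ON.
  split.
  { intros m A P' Ht. apply trans_A in Ht; simpl in Ht. destruct Ht as [R [H1 H2]].
    destruct (OG _ _ H1 ltac:(unfold shape; simpl; congruence)) as [G' [R' [Hs Hr]]].
    unfold relobs in Hr; simpl in Hr. destruct (kind G') eqn:E; simpl in Hr; try contradiction.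
    destruct Hr as [<- [HA HR]]. apply kind_out in E; subst.
    exists A0, R'. split. eapply transA_out; [exact Hs| apply sc_refl]. split; auto.
    eapply EQ_trans; [apply EQ_sc; exact H2| exact HR]. }
  split.
  { intros m P' Ht. apply trans_A in Ht; simpl in Ht. destruct Ht as [P1 [R [H1 H2]]].
    destruct (OG _ _ H1 ltac:(unfold shape; simpl; congruence)) as [G' [R' [Hs Hr]]].
    unfold relobs in Hr; simpl in Hr. destruct (kind G') eqn:E; simpl in Hr; try contradiction.
    destruct Hr as [<- HE]. apply kind_inp in E; subst.
    exists (Par P0 (liftP R')). split. eapply transA_in; [exact Hs| apply sc_refl].
    eapply EQ_trans; [apply EQ_sc; exact H2| exact HE]. }
  split.
  { intros i P' H1.
    destruct (OG _ _ H1 ltac:(unfold shape; simpl; congruence)) as [G' [R' [Hs Hr]]].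
    unfold relobs in Hr; simpl in Hr. destruct (kind G') eqn:E; simpl in Hr; try contradiction.
    destruct Hr as [<- HR]. apply kind_var in E; subst. exists R'; split; auto. }
  split.
  { intros i A P' H1.
    destruct (OG _ _ H1 ltac:(unfold shape; simpl; congruence)) as [G' [R' [Hs Hr]]].
    unfold relobs in Hr; simpl in Hr. destruct (kind G') eqn:E; simpl in Hr; try contradiction.
    destruct Hr as [<- [HA HR]]. apply kind_app in E; subst. exists A0, R'; split; auto. }
  { intros i d P' H1.
    destruct (OG _ _ H1 ltac:(unfold shape; simpl; congruence)) as [G' [R' [Hs Hr]]].
    unfold relobs in Hr; simpl in Hr. destruct (kind G') eqn:E; simpl in Hr; try contradiction.
    destruct Hr as [<- [<- HR]]. apply kind_napp in E; subst. exists R'; split; auto. }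
Qed.

Lemma law_dis_D m P n :
  D (Inp m (Par P (prod (repeat (liftP (Inp m P)) n)))) (prod (repeat (Inp m P) (S n))).
Proof.
  apply D_dis with (repeat P (S n)).
  - simpl; congruence.
  - rewrite map_repeat. apply ac_refl.
  - intros p rest Hp. apply Permutation_sym, Permutation_repeat in Hp. symmetry in Hp.
    apply repeat_eq_cons in Hp. destruct Hp as [<- <-]. simpl.
    rewrite map_repeat. unfold liftP. rewrite ren_prod, map_repeat. apply EQ_refl.
Qed.

Lemma ctx_step_SD P Q : ctx_step P Q -> scong P Q \/ D P Q.
Proof.
  induction 1.
  - destruct H. right; apply law_dis_D. left; apply sc_beta_p. left; apply sc_beta_n.
  - destruct IHctx_step; [left; apply sc_inp; auto | right; constructor; auto].
  - destruct IHctx_step; [left; apply sc_out; auto | right; constructor; auto].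
  - destruct IHctx_step; [left; apply sc_par; auto using sc_refl | right; apply D_par with P' Q; auto; apply ac_refl].
  - destruct IHctx_step; [left; apply sc_par; auto using sc_refl | right; apply D_par with P Q'; auto; apply ac_refl].
  - destruct IHctx_step; [left; apply sc_pabs; auto | right; constructor; auto].
  - destruct IHctx_step; [left; apply sc_papp; auto using sc_refl | right; constructor; auto].
  - destruct IHctx_step; [left; apply sc_papp; auto using sc_refl | right; constructor; auto].
  - destruct IHctx_step; [left; apply sc_nabs; auto | right; constructor; auto].
  - destruct IHctx_step; [left; apply sc_napp; auto | right; constructor; auto].
Qed.

Lemma rw_EQ P Q : rw P Q -> EQ P Q.
Proof.
  intros [P' [Q' [H1 [H2 H3]]]].
  eapply EQ_trans; [apply EQ_sc, sc_sym, H1|].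
  eapply EQ_trans; [|apply EQ_sc, H2].
  destruct (ctx_step_SD _ _ H3); [apply EQ_sc | apply EQ_D]; auto.
Qed.

Lemma EQ_bisim_of P Q : EQ P Q -> bisim P Q.
Proof.
  intros H. exists EQ. split. apply EQ_sym. split. apply EQ_bisim. exact H.
Qed.

Theorem mainTheorem16 :
  (forall P Q : term, rw P Q -> bisim P Q) /\
  (forall P N : term, is_nf_of P N -> bisim P N).
Proof.
  split.
  - intros P Q H. apply EQ_bisim_of, rw_EQ, H.
  - intros P N [H _]. apply EQ_bisim_of. induction H.
    + apply rw_EQ; auto.
    + apply EQ_refl.
    + eapply EQ_trans; eauto.
Qed.
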